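(* Let $X$ be an infinite-dimensional complex separable Hilbert space and $A\in\mathcal B(X)$ with an unconditional basis of eigenvectors $\{\varphi_n\}_{n\ge1}$, $A\varphi_n=-\lambda_n\varphi_n$. Let $b\in X$ and $B:X\to\mathbb C$, $Bx=\langle x,b\rangle$. Then $(A,B)$ is exactly observable on $[0,\infty)$ (equivalently, $\{e^{tA^*}b\}_{t\in[0,\infty)}$ is a semi-continuous frame for $X$) if and only if all of the following hold: (1) $\mathrm{Re}(\lambda_n)>0$ for all $n$; (2) $\mathrm{Re}(\lambda_n)\to0$ as $n\to\infty$; (3) the functions $\mathcal E_n(t)=e^{-\lambda_nt}\langle\varphi_n,b\rangle$, $n\ge1$, form an unconditional sequence in $L^2([0,\infty),\mathbb C)$; (4) there are constants $0<c_1\le c_2<\infty$ with $c_1\le \dfrac{|\langle b,\varphi_n\rangle|}{\|\varphi_n\|\sqrt{2\mathrm{Re}(\lambda_n)}}\le c_2$ for all $n$.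
   Context: $e^{tA}=\sum_n(tA)^n/n!$. $(A,B)$ is exactly observable on $[0,\infty)$ if there are $c_1,c_2>0$ with $c_1\|x\|^2\le\int_0^\infty|\langle e^{tA}x,b\rangle|^2dt\le c_2\|x\|^2$ for all $x\in X$. A sequence $\{\psi_n\}$ is an unconditional sequence if there are $c_1,c_2>0$ with $c_1\sum|a_n|^2\|\psi_n\|^2\le\|\sum a_n\psi_n\|^2\le c_2\sum|a_n|^2\|\psi_n\|^2$ for all finitely supported scalar sequences; an unconditional basis is a complete unconditional sequence. *)

(* Defs.v *)
From Stdlib Require Import Reals Lra ClassicalEpsilon Factorial.
Open Scope R_scope.

Definition CC : Type := (R * R)%type.
Definition CRe (z : CC) : R := fst z.
Definition CIm (z : CC) : R := snd z.
Definition RtoC (r : R) : CC := (r, 0).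
Definition C0 : CC := (0, 0).
Definition C1 : CC := (1, 0).
Definition Cadd (z w : CC) : CC := (fst z + fst w, snd z + snd w).
Definition Copp (z : CC) : CC := (- fst z, - snd z).
Definition Cmul (z w : CC) : CC :=
  (fst z * fst w - snd z * snd w, fst z * snd w + snd z * fst w).
Definition Cconj (z : CC) : CC := (fst z, - snd z).
Definition Cabs (z : CC) : R := sqrt (fst z ^ 2 + snd z ^ 2).
Definition Cexp (z : CC) : CC := (exp (fst z) * cos (snd z), exp (fst z) * sin (snd z)).

Fixpoint Csum (N : nat) (f : nat -> CC) : CC :=
  match N with O => C0 | S k => Cadd (Csum k f) (f k) end.
Fixpoint Rsum (N : nat) (f : nat -> R) : R :=
  match N with O => 0 | S k => Rsum k f + f k end.

Record HilbertSpace := {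
  Hcar :> Type;
  Hzero : Hcar;
  Hadd : Hcar -> Hcar -> Hcar;
  Hopp : Hcar -> Hcar;
  Hscal : CC -> Hcar -> Hcar;
  Hinner : Hcar -> Hcar -> CC;   (* linear in the first argument *)
  Hadd_assoc : forall x y z, Hadd x (Hadd y z) = Hadd (Hadd x y) z;
  Hadd_comm : forall x y, Hadd x y = Hadd y x;
  Hadd_zero : forall x, Hadd Hzero x = x;
  Hadd_opp : forall x, Hadd x (Hopp x) = Hzero;
  Hscal_one : forall x, Hscal C1 x = x;
  Hscal_assoc : forall a c x, Hscal a (Hscal c x) = Hscal (Cmul a c) x;
  Hscal_addr : forall a x y, Hscal a (Hadd x y) = Hadd (Hscal a x) (Hscal a y);
  Hscal_addl : forall a c x, Hscal (Cadd a c) x = Hadd (Hscal a x) (Hscal c x);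
  Hinner_addl : forall x y z, Hinner (Hadd x y) z = Cadd (Hinner x z) (Hinner y z);
  Hinner_scall : forall a x y, Hinner (Hscal a x) y = Cmul a (Hinner x y);
  Hinner_conj : forall x y, Hinner y x = Cconj (Hinner x y);
  Hinner_pos : forall x, 0 <= CRe (Hinner x x);
  Hinner_def : forall x, CRe (Hinner x x) = 0 -> x = Hzero;
  Hcomplete : forall u : nat -> Hcar,
    (forall eps, eps > 0 -> exists N, forall m n, (m >= N)%nat -> (n >= N)%nat ->
        sqrt (CRe (Hinner (Hadd (u m) (Hopp (u n))) (Hadd (u m) (Hopp (u n))))) < eps) ->
    exists l, forall eps, eps > 0 -> exists N, forall n, (n >= N)%nat ->
        sqrt (CRe (Hinner (Hadd (u n) (Hopp l)) (Hadd (u n) (Hopp l)))) < eps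
}.

Arguments Hzero {h}.
Arguments Hadd {h}.
Arguments Hopp {h}.
Arguments Hscal {h}.
Arguments Hinner {h}.

Section HilbertDefs.
Variable H : HilbertSpace.

Definition Hnorm (x : H) : R := sqrt (CRe (Hinner x x)).
Definition Hsub (x y : H) : H := Hadd x (Hopp y).

Fixpoint Hsum (N : nat) (f : nat -> H) : H :=
  match N with O => Hzero | S k => Hadd (Hsum k f) (f k) end.

Definition Hconv (u : nat -> H) (l : H) : Prop :=
  forall eps, eps > 0 -> exists N, forall n, (n >= N)%nat -> Hnorm (Hsub (u n) l) < eps.

(* the limit of a sequence (chosen by classical description; Hzero if none) *)
Definition Hlim (u : nat -> H) : H := epsilon (inhabits Hzero) (fun l => Hconv u l).

Definition separable : Prop :=
  exists d : nat -> H, forall x eps, eps > 0 -> exists n, Hnorm (Hsub x (d n)) < eps.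

Definition infinite_dimensional : Prop :=
  forall N : nat, exists v : nat -> H,
    forall a : nat -> CC, Hsum N (fun n => Hscal (a n) (v n)) = Hzero ->
      forall n, (n < N)%nat -> a n = C0.

Definition bounded_operator (A : H -> H) : Prop :=
  (forall x y, A (Hadd x y) = Hadd (A x) (A y)) /\
  (forall a x, A (Hscal a x) = Hscal a (A x)) /\
  (exists M, forall x, Hnorm (A x) <= M * Hnorm x).

Definition expA (A : H -> H) (t : R) (x : H) : H :=
  Hlim (fun K => Hsum K (fun n => Hscal (RtoC (t ^ n / INR (fact n))) (Nat.iter n A x))).

Definition unconditional_sequence (psi : nat -> H) : Prop :=
  exists c1 c2, c1 > 0 /\ c2 > 0 /\
    forall (N : nat) (a : nat -> CC),
      c1 * Rsum N (fun n => Cabs (a n) ^ 2 * Hnorm (psi n) ^ 2)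
        <= Hnorm (Hsum N (fun n => Hscal (a n) (psi n))) ^ 2 /\
      Hnorm (Hsum N (fun n => Hscal (a n) (psi n))) ^ 2
        <= c2 * Rsum N (fun n => Cabs (a n) ^ 2 * Hnorm (psi n) ^ 2).

Definition complete_sequence (psi : nat -> H) : Prop :=
  forall x eps, eps > 0 -> exists N (a : nat -> CC),
    Hnorm (Hsub x (Hsum N (fun n => Hscal (a n) (psi n)))) < eps.

Definition unconditional_basis (psi : nat -> H) : Prop :=
  unconditional_sequence psi /\ complete_sequence psi.

End HilbertDefs.

(* improper Riemann integral of f over [0,oo) converges to L
   (used only for continuous nonnegative integrands, where it agrees with the
   Lebesgue integral) *)
Definition conv0inf (f : R -> R) (L : R) : Prop :=
  (forall T, 0 <= T -> inhabited (Riemann_integrable f 0 T)) /\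
  (forall eps, eps > 0 -> exists M, forall T (pr : Riemann_integrable f 0 T),
      0 <= T -> M <= T -> Rabs (RiemannInt pr - L) < eps).

Definition int0inf (f : R -> R) : R := epsilon (inhabits 0) (fun L => conv0inf f L).

Definition in_L2 (g : R -> CC) : Prop := exists L, conv0inf (fun t => Cabs (g t) ^ 2) L.
Definition L2norm2 (g : R -> CC) : R := int0inf (fun t => Cabs (g t) ^ 2).

Definition unconditional_sequence_L2 (E : nat -> R -> CC) : Prop :=
  (forall n, in_L2 (E n)) /\
  exists c1 c2, c1 > 0 /\ c2 > 0 /\
    forall (N : nat) (a : nat -> CC),
      exists L, conv0inf (fun t => Cabs (Csum N (fun n => Cmul (a n) (E n t))) ^ 2) L /\
        c1 * Rsum N (fun n => Cabs (a n) ^ 2 * L2norm2 (E n)) <= L /\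
        L <= c2 * Rsum N (fun n => Cabs (a n) ^ 2 * L2norm2 (E n)).

Definition exactly_observable (H : HilbertSpace) (A : H -> H) (b : H) : Prop :=
  exists c1 c2, c1 > 0 /\ c2 > 0 /\
    forall x : H, exists L,
      conv0inf (fun t => Cabs (Hinner (expA H A t x) b) ^ 2) L /\
      c1 * Hnorm H x ^ 2 <= L /\ L <= c2 * Hnorm H x ^ 2.

(* Main.v *)
From Coquelicot Require Import Coquelicot.
From Stdlib Require Import Reals Lra Psatz ClassicalEpsilon FunctionalExtensionality Factorial.
Require Import Defs.
Open Scope R_scope.

Ltac cdes := repeat match goal with z : CC |- _ => destruct z end.
Ltac cunf := unfold Cadd, Cmul, Copp, Cconj, CRe, CIm, RtoC, C0, C1 in *.
Ltac cring := cdes; cunf; simpl; f_equal; ring.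

Lemma Cabs_sq z : Cabs z ^ 2 = fst z ^ 2 + snd z ^ 2.
Proof. unfold Cabs. rewrite pow2_sqrt; [ring| nra]. Qed.
Lemma Cabs_ge0 z : 0 <= Cabs z.
Proof. apply sqrt_pos. Qed.
Lemma Cabs_mul z w : Cabs (Cmul z w) = Cabs z * Cabs w.
Proof. unfold Cabs. rewrite <- sqrt_mult by nra. f_equal. cdes; unfold Cmul; simpl; ring. Qed.
Lemma Cabs_conj z : Cabs (Cconj z) = Cabs z.
Proof. unfold Cabs; cdes; simpl; f_equal; ring. Qed.
Lemma Cabs_fst z : Rabs (fst z) <= Cabs z.
Proof. unfold Cabs. rewrite <- sqrt_Rsqr_abs. apply sqrt_le_1_alt. unfold Rsqr. nra. Qed.
Lemma Cabs_snd z : Rabs (snd z) <= Cabs z.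
Proof. unfold Cabs. rewrite <- sqrt_Rsqr_abs. apply sqrt_le_1_alt. unfold Rsqr. nra. Qed.
Lemma Cabs_le z : Cabs z <= Rabs (fst z) + Rabs (snd z).
Proof. unfold Cabs. apply sqrt_le_1_alt' || idtac.
 rewrite <- (sqrt_pow2 (Rabs (fst z) + Rabs (snd z))) by (pose proof (Rabs_pos (fst z)); pose proof (Rabs_pos (snd z)); lra).
 apply sqrt_le_1_alt. pose proof (Rabs_pos (fst z)); pose proof (Rabs_pos (snd z)).
 rewrite <- (pow2_abs (fst z)), <- (pow2_abs (snd z)). nra. Qed.
Lemma Cabs_add z w : Cabs (Cadd z w) <= Cabs z + Cabs w.
Proof.
  pose proof (Cabs_ge0 z); pose proof (Cabs_ge0 w); pose proof (Cabs_ge0 (Cadd z w)).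
  apply Rsqr_incr_0_var; [|lra]. unfold Rsqr.
  assert (Cabs (Cadd z w) * Cabs (Cadd z w) = Cabs (Cadd z w)^2) by ring.
  rewrite H2, Cabs_sq. pose proof (Cabs_sq z); pose proof (Cabs_sq w).
  destruct z as [a b], w as [c d]; cbn [fst snd Cadd] in *.
  assert ((a*c+b*d) <= Cabs (a,b) * Cabs (c,d)).
  { destruct (Rle_dec (a*c+b*d) 0). apply Rle_trans with 0; [lra| apply Rmult_le_pos; auto].
    apply Rsqr_incr_0_var; [|nra]. unfold Rsqr.
    replace (Cabs (a, b) * Cabs (c, d) * (Cabs (a, b) * Cabs (c, d))) with (Cabs (a,b)^2 * Cabs (c,d)^2) by ring.
    rewrite H3, H4. assert (0 <= (a*d-b*c)^2) by apply pow2_ge_0. nra. }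
  nra.
Qed.
Lemma Cabs_opp z : Cabs (Copp z) = Cabs z.
Proof. unfold Cabs; cdes; simpl; f_equal; ring. Qed.
Lemma Cabs_RtoC r : Cabs (RtoC r) = Rabs r.
Proof. unfold Cabs, RtoC; simpl. rewrite <- sqrt_Rsqr_abs. f_equal. unfold Rsqr; ring. Qed.
Lemma Cabs_zero z : Cabs z = 0 -> z = C0.
Proof. intro h. assert (Cabs z ^2 = 0) by (rewrite h; ring). rewrite Cabs_sq in H.
  destruct z as [a b]; simpl in *. unfold C0. f_equal; nra. Qed.
Lemma Cabs_C0 : Cabs C0 = 0.
Proof. unfold Cabs, C0; cbn [fst snd]. replace (0^2+0^2) with 0 by ring. apply sqrt_0. Qed.
Section Hil.
Variable H : HilbertSpace.
Implicit Types x y z : H.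

Lemma Hadd_zero_r x : Hadd x Hzero = x.
Proof. rewrite Hadd_comm; apply Hadd_zero. Qed.
Lemma Hadd_cancel x y z : Hadd x y = Hadd x z -> y = z.
Proof. intro e. rewrite <- (Hadd_zero H y), <- (Hadd_zero H z), <- (Hadd_opp H x), (Hadd_comm H x).
  rewrite <- !Hadd_assoc, e. reflexivity. Qed.
Lemma Hscal_C0 x : Hscal C0 x = Hzero.
Proof. apply (Hadd_cancel (Hscal C0 x)). rewrite Hadd_zero_r, <- Hscal_addl.
  f_equal. unfold Cadd, C0; simpl; f_equal; ring. Qed.
Lemma Hopp_scal x : Hopp x = Hscal (Copp C1) x.
Proof. apply (Hadd_cancel x). rewrite Hadd_opp.
  transitivity (Hadd (Hscal C1 x) (Hscal (Copp C1) x)); [| now rewrite Hscal_one].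
  rewrite <- Hscal_addl. rewrite <- (Hscal_C0 x). f_equal. unfold Cadd, Copp, C1, C0; simpl; f_equal; ring. Qed.
Lemma Hscal_zero a : Hscal a (@Hzero H) = Hzero.
Proof. transitivity (Hscal a (Hscal C0 (@Hzero H))). f_equal; symmetry; apply Hscal_C0.
  rewrite Hscal_assoc. replace (Cmul a C0) with C0 by cring. apply Hscal_C0. Qed.
Lemma Hinner_zero_l y : Hinner (@Hzero H) y = C0.
Proof. transitivity (Hinner (Hscal C0 (@Hzero H)) y). f_equal; symmetry; apply Hscal_C0.
 rewrite Hinner_scall. generalize (Hinner (@Hzero H) y); intros; cring. Qed.
Lemma Hinner_zero_r y : Hinner y (@Hzero H) = C0.
Proof. rewrite Hinner_conj, Hinner_zero_l. unfold Cconj, C0; simpl; f_equal; ring. Qed.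
Lemma Hinner_addr x y z : Hinner x (Hadd y z) = Cadd (Hinner x y) (Hinner x z).
Proof. rewrite Hinner_conj, Hinner_addl, (Hinner_conj H x y), (Hinner_conj H x z).
  generalize (Hinner y x) (Hinner z x). intros. cring. Qed.
Lemma Hinner_scalr a x y : Hinner x (Hscal a y) = Cmul (Cconj a) (Hinner x y).
Proof. rewrite Hinner_conj, Hinner_scall, (Hinner_conj H x y).
  generalize (Hinner y x). intros. cring. Qed.
Lemma Hinner_im x : snd (Hinner x x) = 0.
Proof. pose proof (Hinner_conj H x x). destruct (Hinner x x) as [a c]. unfold Cconj in H0; simpl in *.
  injection H0. lra. Qed.
Lemma Hinner_self x : Hinner x x = RtoC (CRe (Hinner x x)).
Proof. pose proof (Hinner_im x). destruct (Hinner x x); unfold RtoC, CRe; simpl in *; subst; auto. Qed.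

Lemma Hnorm_ge0 x : 0 <= Hnorm H x.
Proof. apply sqrt_pos. Qed.
Lemma Hnorm_sq x : Hnorm H x ^ 2 = CRe (Hinner x x).
Proof. unfold Hnorm. rewrite pow2_sqrt; auto. apply Hinner_pos. Qed.
Lemma Hnorm_zero_inv x : Hnorm H x = 0 -> x = Hzero.
Proof. intro e. apply Hinner_def. rewrite <- Hnorm_sq, e. ring. Qed.
Lemma Hnorm_zero : Hnorm H Hzero = 0.
Proof. unfold Hnorm. rewrite Hinner_zero_l. unfold CRe, C0; simpl. apply sqrt_0. Qed.

Lemma Hnorm_scal a x : Hnorm H (Hscal a x) = Cabs a * Hnorm H x.
Proof.
  apply Rsqr_inj; [apply Hnorm_ge0| apply Rmult_le_pos; [apply Cabs_ge0|apply Hnorm_ge0]|].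
  unfold Rsqr. replace (Hnorm H (Hscal a x) * Hnorm H (Hscal a x)) with (Hnorm H (Hscal a x)^2) by ring.
  replace (Cabs a * Hnorm H x * (Cabs a * Hnorm H x)) with (Cabs a ^2 * Hnorm H x ^2) by ring.
  rewrite !Hnorm_sq, Cabs_sq, Hinner_scall, Hinner_scalr, Hinner_self.
  generalize (CRe (Hinner x x)). intros. destruct a; unfold Cmul, Cconj, RtoC, CRe; simpl. ring.
Qed.

Lemma Hinner_add_add x y : CRe (Hinner (Hadd x y) (Hadd x y)) =
   CRe (Hinner x x) + 2 * CRe (Hinner x y) + CRe (Hinner y y).
Proof. rewrite !Hinner_addl, !Hinner_addr, (Hinner_conj H x y).
  generalize (Hinner x x) (Hinner y y) (Hinner y x). intros. cdes; cunf; simpl. ring. Qed.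

Lemma Cauchy_Schwarz x y : Cabs (Hinner x y) <= Hnorm H x * Hnorm H y.
Proof.
  destruct (Req_dec (CRe (Hinner y y)) 0) as [e|ne].
  - apply Hinner_def in e. subst. rewrite Hinner_zero_r, Cabs_C0.
    apply Rmult_le_pos; apply Hnorm_ge0.
  - pose proof (Hinner_pos H y) as py. assert (d : 0 < CRe (Hinner y y)) by lra.
    set (mu := Hinner x y). set (dd := CRe (Hinner y y)).
    set (c := (- fst mu / dd, - snd mu / dd) : CC).
    pose proof (Hinner_pos H (Hadd x (Hscal c y))) as P.
    rewrite Hinner_add_add, Hinner_scall, Hinner_scalr, Hinner_scalr in P.
    pose proof (Hinner_im y) as Iy.
    fold mu in P. unfold c, CRe, Cmul, Cconj in P. cbn [fst snd] in P. rewrite Iy in P.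
    change (fst (Hinner y y)) with dd in P. assert (dpos : 0 < dd) by exact d. assert (Edd : dd = CRe (Hinner y y)) by reflexivity. clearbody mu dd c.
    assert (Q: CRe (Hinner x x) * dd - (fst mu ^2 + snd mu^2) >= 0).
    { match type of P with 0 <= ?e => assert (E : e = (CRe (Hinner x x)*dd - (fst mu^2+snd mu^2))/dd) by (unfold CRe; field; lra) end.
      rewrite E in P. apply Rle_ge.
      apply (Rmult_le_reg_r (/ dd)). apply Rinv_0_lt_compat; lra. rewrite Rmult_0_l. apply P. }
    assert (Cabs mu ^2 <= (Hnorm H x * Hnorm H y)^2).
    { rewrite Cabs_sq, Rpow_mult_distr, !Hnorm_sq. rewrite <- Edd. lra. }
    apply pow_incr_inv with 1%nat || idtac.
    apply Rsqr_incr_0_var. unfold Rsqr. nra. apply Rmult_le_pos; apply Hnorm_ge0.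
Qed.

Lemma Hnorm_add x y : Hnorm H (Hadd x y) <= Hnorm H x + Hnorm H y.
Proof.
  apply Rsqr_incr_0_var; [|pose proof (Hnorm_ge0 x); pose proof (Hnorm_ge0 y); lra].
  unfold Rsqr. replace (Hnorm H (Hadd x y) * Hnorm H (Hadd x y)) with (Hnorm H (Hadd x y)^2) by ring.
  rewrite Hnorm_sq, Hinner_add_add.
  pose proof (Cauchy_Schwarz x y). pose proof (Cabs_fst (Hinner x y)).
  pose proof (Hnorm_sq x). pose proof (Hnorm_sq y). unfold CRe in *.
  pose proof (Rle_abs (fst (Hinner x y))). nra.
Qed.
Lemma Hopp_add x y : Hopp (Hadd x y) = Hadd (Hopp x) (Hopp y).
Proof. rewrite !Hopp_scal, Hscal_addr. reflexivity. Qed.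
Lemma Hadd_AC (a b c d : H) : Hadd (Hadd a b) (Hadd c d) = Hadd (Hadd a c) (Hadd b d).
Proof. rewrite <- !Hadd_assoc. f_equal. rewrite !Hadd_assoc. f_equal. apply Hadd_comm. Qed.
Lemma Hsub_add x y (l m : H) : Hsub H (Hadd x y) (Hadd l m) = Hadd (Hsub H x l) (Hsub H y m).
Proof. unfold Hsub. rewrite Hopp_add. apply Hadd_AC. Qed.
Lemma Hsub_scal (a : CC) x y : Hsub H (Hscal a x) (Hscal a y) = Hscal a (Hsub H x y).
Proof. unfold Hsub. rewrite Hscal_addr, !Hopp_scal, !Hscal_assoc. do 2 f_equal. cring. Qed.
Lemma Hsub_diag x : Hsub H x x = Hzero.
Proof. apply Hadd_opp. Qed.
Lemma Hsub_zero x : Hsub H x Hzero = x.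
Proof. unfold Hsub. rewrite Hopp_scal, Hscal_zero. apply Hadd_zero_r. Qed.
Lemma Hsub_chain x y z : Hsub H x z = Hadd (Hsub H x y) (Hsub H y z).
Proof. unfold Hsub. rewrite <- Hadd_assoc. f_equal. rewrite Hadd_assoc, (Hadd_comm H (Hopp y) y), Hadd_opp, Hadd_zero. auto. Qed.
Lemma Hsub_swap x y : Hsub H y x = Hscal (Copp C1) (Hsub H x y).
Proof. unfold Hsub. rewrite !Hopp_scal, Hscal_addr, Hscal_assoc.
  replace (Cmul (Copp C1) (Copp C1)) with C1 by cring. rewrite Hscal_one. apply Hadd_comm. Qed.
Lemma Hnorm_sub_sym x y : Hnorm H (Hsub H x y) = Hnorm H (Hsub H y x).
Proof. rewrite (Hsub_swap x y), Hnorm_scal. replace (Cabs (Copp C1)) with 1. ring.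
  rewrite Cabs_opp. unfold Cabs, C1; cbn [fst snd]. replace (1^2+0^2) with 1 by ring. symmetry; apply sqrt_1. Qed.
Lemma Hnorm_sub_tri x y z : Hnorm H (Hsub H x z) <= Hnorm H (Hsub H x y) + Hnorm H (Hsub H y z).
Proof. rewrite (Hsub_chain x y z). apply Hnorm_add. Qed.
Lemma Hnorm_rev_tri x y : Hnorm H x - Hnorm H y <= Hnorm H (Hsub H x y).
Proof. pose proof (Hnorm_sub_tri x y Hzero). rewrite !Hsub_zero in H0. lra. Qed.
Lemma Hinner_sub_l x y (b : H) : Hinner (Hsub H x y) b = Cadd (Hinner x b) (Copp (Hinner y b)).
Proof. unfold Hsub. rewrite Hinner_addl, Hopp_scal, Hinner_scall. f_equal. generalize (Hinner y b); intros; cring. Qed.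

Lemma Hconv_unique (u : nat -> H) l m : Hconv H u l -> Hconv H u m -> l = m.
Proof.
  intros cl cm. apply (Hadd_cancel (Hopp m)). rewrite (Hadd_comm H (Hopp m) m), Hadd_opp, Hadd_comm.
  fold (Hsub H l m). apply Hnorm_zero_inv.
  apply Rle_antisym; [|apply Hnorm_ge0]. apply Rnot_lt_le. intro pos.
  set (e := Hnorm H (Hsub H l m) / 2). assert (ep : e > 0) by (unfold e; lra).
  destruct (cl e ep) as [N1 h1]. destruct (cm e ep) as [N2 h2].
  specialize (h1 (N1+N2)%nat ltac:(lia)). specialize (h2 (N1+N2)%nat ltac:(lia)).
  pose proof (Hnorm_sub_tri l (u (N1+N2)%nat) m). rewrite (Hnorm_sub_sym l (u (N1+N2)%nat)) in H0. unfold e in *. lra.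
Qed.
Lemma Hlim_spec (u : nat -> H) l : Hconv H u l -> Hlim H u = l.
Proof. intro c. apply (Hconv_unique u). 2: exact c. unfold Hlim.
  apply epsilon_spec. exists l; exact c. Qed.
Lemma Hconv_add (u v : nat -> H) (l m : H) : Hconv H u l -> Hconv H v m -> Hconv H (fun n => Hadd (u n) (v n)) (Hadd l m).
Proof. intros cu cv eps ep. destruct (cu (eps/2) ltac:(lra)) as [N1 h1]. destruct (cv (eps/2) ltac:(lra)) as [N2 h2].
  exists (N1+N2)%nat. intros n hn. rewrite Hsub_add. eapply Rle_lt_trans. apply Hnorm_add.
  specialize (h1 n ltac:(lia)). specialize (h2 n ltac:(lia)). lra. Qed.
Lemma Hconv_scal (a : CC) (u : nat -> H) l : Hconv H u l -> Hconv H (fun n => Hscal a (u n)) (Hscal a l).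
Proof. intros cu eps ep. destruct (cu (eps / (Cabs a + 1))) as [N h].
  apply Rdiv_lt_0_compat; [lra| pose proof (Cabs_ge0 a); lra].
  exists N. intros n hn. rewrite Hsub_scal, Hnorm_scal. specialize (h n hn).
  pose proof (Cabs_ge0 a). pose proof (Hnorm_ge0 (Hsub H (u n) l)).
  apply (Rmult_lt_compat_l (Cabs a + 1)) in h; [|lra]. field_simplify in h; [|lra]. nra. Qed.
Lemma Hconv_norm_le (u : nat -> H) l B : (forall n, Hnorm H (u n) <= B) -> Hconv H u l -> Hnorm H l <= B.
Proof. intros hb cu. apply Rnot_lt_le. intro lt. destruct (cu (Hnorm H l - B) ltac:(lra)) as [N h].
  specialize (h N (le_n _)). specialize (hb N). pose proof (Hnorm_rev_tri l (u N)). rewrite (Hnorm_sub_sym l (u N)) in H0. lra. Qed.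
Lemma Hconv_inner (u : nat -> H) l (b : H) : Hconv H u l -> forall eps, eps > 0 -> exists N, forall n, (n >= N)%nat ->
   Cabs (Cadd (Hinner (u n) b) (Copp (Hinner l b))) < eps.
Proof. intros cu eps ep. destruct (cu (eps / (Hnorm H b + 1))) as [N h].
  apply Rdiv_lt_0_compat; [lra| pose proof (Hnorm_ge0 b); lra].
  exists N. intros n hn. rewrite <- Hinner_sub_l. eapply Rle_lt_trans. apply Cauchy_Schwarz.
  specialize (h n hn). pose proof (Hnorm_ge0 b). pose proof (Hnorm_ge0 (Hsub H (u n) l)).
  apply (Rmult_lt_compat_l (Hnorm H b + 1)) in h; [|lra]. field_simplify in h; [|lra]. nra. Qed.

Lemma Hsum_ext N (f g : nat -> H) : (forall n, (n < N)%nat -> f n = g n) -> Hsum H N f = Hsum H N g.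
Proof. induction N; intro e; simpl; auto. rewrite IHN by (intros; apply e; lia). rewrite e by lia. auto. Qed.
Lemma Hsum_add N (f g : nat -> H) : Hsum H N (fun n => Hadd (f n) (g n)) = Hadd (Hsum H N f) (Hsum H N g).
Proof. induction N; simpl. symmetry; apply Hadd_zero. rewrite IHN. apply Hadd_AC. Qed.
Lemma Hsum_scal (a : CC) N (f : nat -> H) : Hscal a (Hsum H N f) = Hsum H N (fun n => Hscal a (f n)).
Proof. induction N; simpl. apply Hscal_zero. rewrite Hscal_addr, IHN. auto. Qed.
Lemma Hsum_scal_vec N (c : nat -> CC) (v : H) : Hsum H N (fun n => Hscal (c n) v) = Hscal (Csum N c) v.
Proof. induction N; simpl. symmetry. apply Hscal_C0. rewrite IHN, Hscal_addl. auto. Qed.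
Lemma Hinner_Hsum N (f : nat -> H) (b : H) : Hinner (Hsum H N f) b = Csum N (fun n => Hinner (f n) b).
Proof. induction N; simpl. apply Hinner_zero_l. rewrite Hinner_addl, IHN. auto. Qed.
Lemma Hnorm_Hsum N (f : nat -> H) : Hnorm H (Hsum H N f) <= Rsum N (fun n => Hnorm H (f n)).
Proof. induction N; simpl. rewrite Hnorm_zero; lra. eapply Rle_trans. apply Hnorm_add. lra. Qed.
Lemma Hsum_sub_norm (f : nat -> H) m n : (n <= m)%nat -> Hnorm H (Hsub H (Hsum H m f) (Hsum H n f)) <= Rsum m (fun k => Hnorm H (f k)) - Rsum n (fun k => Hnorm H (f k)).
Proof. intro le. induction le. rewrite Hsub_diag, Hnorm_zero. lra.
  simpl. rewrite (Hsub_chain _ (Hsum H m f)). eapply Rle_trans. apply Hnorm_add.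
  replace (Hsub H (Hadd (Hsum H m f) (f m)) (Hsum H m f)) with (f m). lra.
  unfold Hsub. rewrite (Hadd_comm H (Hsum H m f)), <- Hadd_assoc, Hadd_opp, Hadd_zero_r. auto. Qed.
End Hil.

Lemma Rsum_ext N f g : (forall n, (n < N)%nat -> f n = g n) -> Rsum N f = Rsum N g.
Proof. induction N; intro e; simpl; auto. rewrite IHN by (intros; apply e; lia). rewrite e by lia. auto. Qed.
Lemma Rsum_ge0 N f : (forall n, 0 <= f n) -> 0 <= Rsum N f.
Proof. intro p. induction N; simpl. lra. specialize (p N). lra. Qed.
Lemma Rsum_diff_le f g m n : (n <= m)%nat -> (forall k, f k <= g k) ->
  Rsum m f - Rsum n f <= Rsum m g - Rsum n g.
Proof. intros le fg. induction le. lra. simpl. specialize (fg m). lra. Qed.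
Lemma Rsum_mono f m n : (n <= m)%nat -> (forall k, 0 <= f k) -> Rsum n f <= Rsum m f.
Proof. intros le p. induction le. lra. simpl. specialize (p m). lra. Qed.
Lemma Rsum_sum_f N f : Rsum (S N) f = sum_f_R0 f N.
Proof. induction N. simpl. ring. change (Rsum (S N) f + f (S N) = sum_f_R0 f N + f (S N)). rewrite IHN. auto. Qed.
Lemma Rsum_scal N c f : Rsum N (fun n => c * f n) = c * Rsum N f.
Proof. induction N; simpl. ring. rewrite IHN. ring. Qed.
Lemma Rsum_plus N f g : Rsum N (fun n => f n + g n) = Rsum N f + Rsum N g.
Proof. induction N; simpl. ring. rewrite IHN. ring. Qed.
Lemma Rsum_le N f g : (forall n, f n <= g n) -> Rsum N f <= Rsum N g.
Proof. intro h. induction N; simpl. lra. specialize (h N). lra. Qed.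

Lemma exp_series y : Un_cv (fun K => Rsum K (fun k => y ^ k / INR (fact k))) (exp y).
Proof.
  intros eps ep. unfold exp. destruct (exist_exp y) as [l hl]. simpl.
  destruct (hl eps ep) as [N hN]. exists (S N). intros n hn.
  destruct n. lia. rewrite Rsum_sum_f.
  replace (sum_f_R0 (fun k => y ^ k / INR (fact k)) n) with (sum_f_R0 (fun i => / INR (fact i) * y ^ i) n).
  apply hN. lia. apply sum_eq. intros. unfold Rdiv. ring.
Qed.

Lemma exp_series_le y K : 0 <= y -> Rsum K (fun k => y ^ k / INR (fact k)) <= exp y.
Proof. intro p. apply (growing_ineq (fun K => Rsum K (fun k => y ^ k / INR (fact k)))).
  intro n. simpl. assert (0 <= y ^ n / INR (fact n)). apply Rdiv_le_0_compat. apply pow_le; auto.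
  apply lt_0_INR, lt_O_fact. lra. apply exp_series. Qed.

Section ExpA.
Variable H : HilbertSpace.
Variable A : H -> H.
Variable M : R.
Hypothesis HM : 0 <= M.
Hypothesis Aadd : forall x y, A (Hadd x y) = Hadd (A x) (A y).
Hypothesis Ascal : forall a x, A (Hscal a x) = Hscal a (A x).
Hypothesis Abnd : forall x, Hnorm H (A x) <= M * Hnorm H x.

Lemma iter_add n x y : Nat.iter n A (Hadd x y) = Hadd (Nat.iter n A x) (Nat.iter n A y).
Proof. induction n; simpl; auto. rewrite IHn, Aadd. auto. Qed.
Lemma iter_scal n a x : Nat.iter n A (Hscal a x) = Hscal a (Nat.iter n A x).
Proof. induction n; simpl; auto. rewrite IHn, Ascal. auto. Qed.
Lemma iter_bnd n x : Hnorm H (Nat.iter n A x) <= M ^ n * Hnorm H x.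
Proof. induction n; simpl. lra. eapply Rle_trans. apply Abnd. pose proof (Hnorm_ge0 H (Nat.iter n A x)). nra. Qed.

Definition eterm (t : R) (x : H) (k : nat) : H := Hscal (RtoC (t ^ k / INR (fact k))) (Nat.iter k A x).
Definition epart t x K := Hsum H K (eterm t x).

Lemma eterm_bnd t x k : Hnorm H (eterm t x k) <= (Rabs t * M) ^ k / INR (fact k) * Hnorm H x.
Proof. unfold eterm. rewrite Hnorm_scal, Cabs_RtoC. pose proof (iter_bnd k x).
  assert (0 < INR (fact k)) by (apply lt_0_INR, lt_O_fact).
  unfold Rdiv. rewrite Rabs_mult, Rabs_inv, <- RPow_abs, (Rabs_right (INR _)) by lra. rewrite Rpow_mult_distr. assert (0 <= Rabs t ^ k * / INR (fact k)). apply Rmult_le_pos. apply pow_le, Rabs_pos. left; apply Rinv_0_lt_compat; auto.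
  replace (Rabs t ^ k * M ^ k * / INR (fact k) * Hnorm H x) with (Rabs t ^ k * / INR (fact k) * (M ^ k * Hnorm H x)) by ring.
  apply Rmult_le_compat_l; auto. Qed.

Lemma epart_bnd t x K : Hnorm H (epart t x K) <= exp (Rabs t * M) * Hnorm H x.
Proof. unfold epart. eapply Rle_trans. apply Hnorm_Hsum. eapply Rle_trans. apply Rsum_le. intro; apply eterm_bnd.
  rewrite (Rsum_ext _ _ (fun n => Hnorm H x * ((Rabs t * M) ^ n / INR (fact n)))) by (intros; ring).
  rewrite Rsum_scal. rewrite (Rmult_comm (exp _)). apply Rmult_le_compat_l. apply Hnorm_ge0. apply exp_series_le.
  pose proof (Rabs_pos t). nra. Qed.

Lemma epart_conv t x : Hconv H (epart t x) (expA H A t x).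
Proof.
  assert (ex : exists l, Hconv H (epart t x) l).
  { apply Hcomplete. intros eps ep.
    set (g := fun k => (Rabs t * M) ^ k / INR (fact k) * Hnorm H x).
    assert (cg : Cauchy_crit (fun K => Rsum K g)).
    { apply CV_Cauchy. exists (exp (Rabs t * M) * Hnorm H x).
      unfold g. intros e0 e0p.
      destruct (Req_dec (Hnorm H x) 0) as [z|nz].
      - exists O. intros. rewrite (Rsum_ext _ _ (fun _ => 0)) by (intros; rewrite z; ring).
        rewrite z. unfold Rdist. replace (Rsum n (fun _ => 0)) with 0. rewrite Rmult_0_r, Rminus_0_r, Rabs_R0; auto.
        clear H0; induction n; simpl; auto; rewrite <- IHn; ring.
      - assert (0 < Hnorm H x) by (pose proof (Hnorm_ge0 H x); lra).
        destruct (exp_series (Rabs t * M) (e0 / Hnorm H x)) as [N hN]. apply Rdiv_lt_0_compat; auto.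
        exists N. intros n hn. specialize (hN n hn).
        rewrite (Rsum_ext _ _ (fun k => Hnorm H x * ((Rabs t * M) ^ k / INR (fact k)))) by (intros; ring).
        rewrite Rsum_scal. unfold Rdist in *.
        match goal with |- Rabs (?a * ?s - ?e * ?a) < _ => replace (a*s - e*a) with (a*(s-e)) by ring end.
        rewrite Rabs_mult, (Rabs_right (Hnorm H x)) by lra.
        apply (Rmult_lt_compat_l (Hnorm H x)) in hN; auto. field_simplify in hN; lra. }
    destruct (cg eps ep) as [N hN]. exists N. intros m n hm hn.
    fold (Hsub H (epart t x m) (epart t x n)). fold (Hnorm H (Hsub H (epart t x m) (epart t x n))).
    destruct (Nat.le_ge_cases n m) as [le|ge].
    - eapply Rle_lt_trans. apply Hsum_sub_norm; auto. eapply Rle_lt_trans. apply Rsum_diff_le; auto. intro; apply eterm_bnd.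
      specialize (hN m n hm hn). unfold Rdist in hN. fold g. eapply Rle_lt_trans. apply Rle_abs. auto.
    - rewrite Hnorm_sub_sym. eapply Rle_lt_trans. apply Hsum_sub_norm; auto. eapply Rle_lt_trans. apply Rsum_diff_le; auto. intro; apply eterm_bnd.
      specialize (hN n m hn hm). unfold Rdist in hN. fold g. eapply Rle_lt_trans. apply Rle_abs. auto. }
  destruct ex as [l hl]. unfold expA. fold (eterm t x). fold (epart t x).
  rewrite (Hlim_spec H _ l hl). auto.
Qed.
End ExpA.
Fixpoint Cpow (w : CC) (k : nat) : CC := match k with O => C1 | S k => Cmul w (Cpow w k) end.
Definition cser (w : CC) (t : R) (K : nat) : CC := Csum K (fun k => Cmul (RtoC (t ^ k / INR (fact k))) (Cpow w k)).

Lemma dpl_ext f g s l : derivable_pt_lim f s l -> (forall u, f u = g u) -> derivable_pt_lim g s l.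
Proof. intros d e. unfold derivable_pt_lim in *. intros eps ep. destruct (d eps ep) as [del hd].
  exists del. intros h hn hh. rewrite <- !e. auto. Qed.
Lemma dpl_eq f s l l' : derivable_pt_lim f s l -> l = l' -> derivable_pt_lim f s l'.
Proof. intros; subst; auto. Qed.
Lemma dpl_lin c s : derivable_pt_lim (fun u => c * u) s c.
Proof. eapply dpl_eq. apply (derivable_pt_lim_scal id c s 1). apply derivable_pt_lim_id. ring. Qed.

Definition CDer (f : R -> CC) (s : R) (d : CC) :=
  derivable_pt_lim (fun u => fst (f u)) s (fst d) /\ derivable_pt_lim (fun u => snd (f u)) s (snd d).

Lemma CDer_ext f g s d d' : CDer f s d -> (forall u, f u = g u) -> d = d' -> CDer g s d'.
Proof. intros [h1 h2] e ed; subst; split.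
  apply (dpl_ext (fun u => fst (f u))); [exact h1 | intro u; rewrite e; auto].
  apply (dpl_ext (fun u => snd (f u))); [exact h2 | intro u; rewrite e; auto]. Qed.
Lemma CDer_add f g s df dg : CDer f s df -> CDer g s dg -> CDer (fun u => Cadd (f u) (g u)) s (Cadd df dg).
Proof. intros [f1 f2] [g1 g2]. split.
  - exact (derivable_pt_lim_plus (fun u => fst (f u)) (fun u => fst (g u)) s _ _ f1 g1).
  - exact (derivable_pt_lim_plus (fun u => snd (f u)) (fun u => snd (g u)) s _ _ f2 g2). Qed.
Lemma CDer_mul f g s df dg : CDer f s df -> CDer g s dg ->
  CDer (fun u => Cmul (f u) (g u)) s (Cadd (Cmul df (g s)) (Cmul (f s) dg)).
Proof. intros [f1 f2] [g1 g2].
  pose proof (derivable_pt_lim_mult _ _ _ _ _ f1 g1) as a11.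
  pose proof (derivable_pt_lim_mult _ _ _ _ _ f2 g2) as a22.
  pose proof (derivable_pt_lim_mult _ _ _ _ _ f1 g2) as a12.
  pose proof (derivable_pt_lim_mult _ _ _ _ _ f2 g1) as a21.
  split.
  - eapply dpl_eq. exact (derivable_pt_lim_minus _ _ _ _ _ a11 a22).
    unfold mult_fct. destruct df, dg, (f s), (g s); simpl. ring.
  - eapply dpl_eq. exact (derivable_pt_lim_plus _ _ _ _ _ a12 a21).
    unfold mult_fct. destruct df, dg, (f s), (g s); simpl. ring. Qed.
Lemma CDer_const c s : CDer (fun _ => c) s C0.
Proof. split; apply derivable_pt_lim_const. Qed.
Lemma CDer_rscal r c s dr : derivable_pt_lim r s dr -> CDer (fun u => Cmul (RtoC (r u)) c) s (Cmul (RtoC dr) c).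
Proof. intro d. destruct c as [c1 c2]. split; unfold Cmul, RtoC; cbn [fst snd].
  - eapply dpl_ext; [eapply dpl_eq; [apply (derivable_pt_lim_scal r c1 s dr d) | ring] | intro; unfold mult_real_fct; ring].
  - eapply dpl_ext; [eapply dpl_eq; [apply (derivable_pt_lim_scal r c2 s dr d) | ring] | intro; unfold mult_real_fct; ring].
Qed.

Lemma Cmul_RtoC c s : Cmul c (RtoC s) = (fst c * s, snd c * s).
Proof. destruct c; unfold Cmul, RtoC; simpl; f_equal; ring. Qed.

Lemma CDer_exp c s : CDer (fun u => Cexp (Cmul c (RtoC u))) s (Cmul c (Cexp (Cmul c (RtoC s)))).
Proof.
  destruct c as [c1 c2].
  assert (de : derivable_pt_lim (fun u => exp (c1 * u)) s (c1 * exp (c1 * s))).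
  { eapply dpl_eq. apply (derivable_pt_lim_comp (fun u => c1 * u) exp s c1). apply dpl_lin. apply derivable_pt_lim_exp. ring. }
  assert (dc : derivable_pt_lim (fun u => cos (c2 * u)) s (- c2 * sin (c2 * s))).
  { eapply dpl_eq. apply (derivable_pt_lim_comp (fun u => c2 * u) cos s c2). apply dpl_lin. apply derivable_pt_lim_cos. ring. }
  assert (ds : derivable_pt_lim (fun u => sin (c2 * u)) s (c2 * cos (c2 * s))).
  { eapply dpl_eq. apply (derivable_pt_lim_comp (fun u => c2 * u) sin s c2). apply dpl_lin. apply derivable_pt_lim_sin. ring. }
  split; rewrite !Cmul_RtoC; unfold Cexp, Cmul; cbn [fst snd].
  - eapply dpl_ext. eapply dpl_eq. apply (derivable_pt_lim_mult _ _ _ _ _ de dc). ring. intro u; unfold mult_fct, RtoC; cbn [fst snd]; repeat rewrite Rmult_0_r; rewrite ?Rminus_0_r, ?Rplus_0_l; reflexivity.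
  - eapply dpl_ext. eapply dpl_eq. apply (derivable_pt_lim_mult _ _ _ _ _ de ds). ring. intro u; unfold mult_fct, RtoC; cbn [fst snd]; repeat rewrite Rmult_0_r; rewrite ?Rminus_0_r, ?Rplus_0_l; reflexivity.
Qed.
Lemma dpow_fact k s : derivable_pt_lim (fun u => u ^ (S k) / INR (fact (S k))) s (s ^ k / INR (fact k)).
Proof.
  assert (0 < INR (fact k)) by (apply lt_0_INR, lt_O_fact).
  eapply dpl_ext. eapply dpl_eq. apply (derivable_pt_lim_scal _ (/ INR (fact (S k))) s _ (derivable_pt_lim_pow s (S k))).
  simpl pred. rewrite fact_simpl, mult_INR. rewrite S_INR. field. split; lra || (pose proof (pos_INR k); lra).
  intro u. unfold mult_real_fct. unfold Rdiv. ring.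
Qed.

Lemma cser_der w K s : CDer (fun u => cser w u (S K)) s (Cmul w (cser w s K)).
Proof.
  induction K.
  - eapply CDer_ext. apply (CDer_add _ _ s _ _ (CDer_const C0 s) (CDer_rscal (fun u => u ^ 0 / INR (fact 0)) (Cpow w 0) s 0 (derivable_pt_lim_const (1 / INR (fact 0)) s))).
    intro; reflexivity. unfold cser; simpl. cring.
  - eapply CDer_ext. apply (CDer_add _ _ s _ _ IHK (CDer_rscal _ (Cpow w (S K)) s _ (dpow_fact K s))).
    intro; reflexivity.
    change (cser w s (S K)) with (Cadd (cser w s K) (Cmul (RtoC (s ^ K / INR (fact K))) (Cpow w K))).
    change (Cpow w (S K)) with (Cmul w (Cpow w K)).
    generalize (cser w s K) (RtoC (s ^ K / INR (fact K))) (Cpow w K). intros. cring.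
Qed.

Definition qf (w : CC) (u : R) := Cexp (Cmul (Copp w) (RtoC u)).

Lemma D_der w K s : CDer (fun u => Cmul (cser w u (S K)) (qf w u)) s
  (Cmul (Copp w) (Cmul (Cmul (RtoC (s ^ K / INR (fact K))) (Cpow w K)) (qf w s))).
Proof.
  eapply CDer_ext. apply (CDer_mul _ _ s _ _ (cser_der w K s) (CDer_exp (Copp w) s)).
  intro; reflexivity. fold (qf w s).
  change (cser w s (S K)) with (Cadd (cser w s K) (Cmul (RtoC (s ^ K / INR (fact K))) (Cpow w K))).
  generalize (cser w s K) (Cmul (RtoC (s ^ K / INR (fact K))) (Cpow w K)) (qf w s). intros. cring.
Qed.

Lemma Cabs_Cexp z : Cabs (Cexp z) = exp (fst z).
Proof. unfold Cabs, Cexp; cbn [fst snd].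
  replace ((exp (fst z) * cos (snd z)) ^ 2 + (exp (fst z) * sin (snd z)) ^ 2) with (exp (fst z) ^ 2).
  apply sqrt_pow2. left; apply exp_pos.
  pose proof (sin2_cos2 (snd z)). unfold Rsqr in H. nra. Qed.
Lemma Cabs_Cpow w k : Cabs (Cpow w k) = Cabs w ^ k.
Proof. induction k; simpl. unfold Cabs, C1; cbn [fst snd]. replace (1^2+0^2) with 1 by ring. apply sqrt_1.
  rewrite Cabs_mul, IHk. auto. Qed.

Lemma mvt_bound F F' t B : (forall u, derivable_pt_lim F u (F' u)) ->
  (forall u, Rabs u <= Rabs t -> Rabs (F' u) <= B) -> Rabs (F t - F 0) <= B * Rabs t.
Proof.
  intros d b. destruct (Rtotal_order t 0) as [lt|[eq|gt]].
  - destruct (MVT_cor2 F F' t 0 lt (fun c _ => d c)) as [c [e hc]].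
    rewrite <- Rabs_Ropp. replace (- (F t - F 0)) with (F 0 - F t) by ring. rewrite e.
    rewrite Rabs_mult. replace (0 - t) with (Rabs t) by (rewrite Rabs_left; lra).
    rewrite (Rabs_pos_eq (Rabs t)) by (apply Rabs_pos). apply Rmult_le_compat_r. apply Rabs_pos. apply b.
    rewrite (Rabs_left t) by lra. unfold Rabs; destruct (Rcase_abs c); lra.
  - subst. rewrite Rminus_diag, !Rabs_R0. lra.
  - destruct (MVT_cor2 F F' 0 t gt (fun c _ => d c)) as [c [e hc]].
    rewrite e. rewrite Rabs_mult. replace (t - 0) with (Rabs t) by (rewrite Rabs_right; lra).
    rewrite (Rabs_pos_eq (Rabs t)) by (apply Rabs_pos). apply Rmult_le_compat_r. apply Rabs_pos. apply b.
    rewrite (Rabs_right t) by lra. unfold Rabs; destruct (Rcase_abs c); lra.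
Qed.

Lemma cser_0 w K : cser w 0 (S K) = C1.
Proof. induction K. unfold cser; simpl. unfold Cadd, Cmul, RtoC, C0, C1; simpl; f_equal; field. change (cser w 0 (S (S K))) with
  (Cadd (cser w 0 (S K)) (Cmul (RtoC (0 ^ (S K) / INR (fact (S K)))) (Cpow w (S K)))). rewrite IHK.
  simpl pow. rewrite Rmult_0_l. unfold Rdiv. rewrite Rmult_0_l. generalize (Cpow w (S K)); intros; cring. Qed.
Lemma qf_0 w : qf w 0 = C1.
Proof. unfold qf. rewrite Cmul_RtoC. unfold Cexp; cbn [fst snd]. rewrite !Rmult_0_r, exp_0, cos_0, sin_0. cring. Qed.
Lemma qf_E w t : Cmul (qf w t) (Cexp (Cmul w (RtoC t))) = C1.
Proof. unfold qf. rewrite !Cmul_RtoC. destruct w as [w1 w2]. unfold Cexp, Copp, Cmul, C1; cbn [fst snd].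
  replace (- w1 * t) with (- (w1 * t)) by ring. replace (- w2 * t) with (- (w2 * t)) by ring.
  rewrite cos_neg, sin_neg. pose proof (sin2_cos2 (w2 * t)). unfold Rsqr in H.
  assert (exp (- (w1 * t)) * exp (w1 * t) = 1) by (rewrite <- exp_plus; replace (- (w1 * t) + w1 * t) with 0 by ring; apply exp_0).
  f_equal; nra. Qed.

Lemma cser_conv w t : forall eps, eps > 0 -> exists N, forall K, (K >= N)%nat ->
  Cabs (Cadd (cser w t K) (Copp (Cexp (Cmul w (RtoC t))))) < eps.
Proof.
  intros eps ep. set (E := Cexp (Cmul w (RtoC t))). set (a := Cabs w). set (Q := exp (a * Rabs t)).
  assert (a0 : 0 <= a) by apply Cabs_ge0. assert (Q0 : 0 < Q) by apply exp_pos.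
  set (C := 2 * a * Q * Rabs t * Cabs E).
  assert (C0' : 0 <= C). { unfold C. pose proof (Rabs_pos t). pose proof (Cabs_ge0 E). apply Rmult_le_pos; [|auto]. apply Rmult_le_pos; [|auto]. nra. }
  destruct (cv_speed_pow_fact (a * Rabs t) (eps / (C + 1))) as [N0 hN0]. apply Rdiv_lt_0_compat; lra.
  exists (S N0). intros K hK. destruct K as [|K]. lia.
  specialize (hN0 K ltac:(lia)). unfold Rdist in hN0. rewrite Rminus_0_r in hN0.
  set (x := (a * Rabs t) ^ K / INR (fact K)) in *.
  assert (x0 : 0 <= x). { unfold x. apply Rdiv_le_0_compat. apply pow_le. pose proof (Rabs_pos t); nra. apply lt_0_INR, lt_O_fact. }
  rewrite Rabs_right in hN0 by lra.
  set (B := a * (Rabs t ^ K / INR (fact K) * a ^ K) * Q).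
  assert (bd : forall u, Rabs u <= Rabs t -> Cabs (Cmul (Copp w) (Cmul (Cmul (RtoC (u ^ K / INR (fact K))) (Cpow w K)) (qf w u))) <= B).
  { intros u hu. rewrite !Cabs_mul, Cabs_opp, Cabs_RtoC, Cabs_Cpow. unfold qf. rewrite Cabs_Cexp, Cmul_RtoC. fold a. unfold B.
    assert (F : 0 < INR (fact K)) by (apply lt_0_INR, lt_O_fact).
    assert (h1 : Rabs (u ^ K / INR (fact K)) <= Rabs t ^ K / INR (fact K)).
    { unfold Rdiv. rewrite Rabs_mult, Rabs_inv, <- RPow_abs, (Rabs_right (INR _)) by lra.
      apply Rmult_le_compat_r. left; apply Rinv_0_lt_compat; auto. apply pow_incr. split; [apply Rabs_pos|auto]. }
    assert (h2 : exp (fst (Copp w) * u) <= Q).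
    { unfold Q.
      assert (hh : fst (Copp w) * u <= a * Rabs t).
      { eapply Rle_trans. apply Rle_abs. rewrite Rabs_mult. apply Rmult_le_compat; try apply Rabs_pos; auto.
        unfold a. rewrite <- Cabs_opp. apply Cabs_fst. }
      destruct hh as [hh|hh]. left; apply exp_increasing; auto. rewrite hh; lra. }
    pose proof (Rabs_pos (u ^ K / INR (fact K))). pose proof (pow_le a K a0). pose proof (exp_pos (fst (Copp w) * u)).
    cbn [fst]. rewrite (Rmult_assoc a _ Q). apply Rmult_le_compat_l; auto.
    apply Rmult_le_compat; auto. apply Rmult_le_pos; auto. left; auto.
    apply Rmult_le_compat_r; auto. }
  pose proof (mvt_bound (fun u => fst (Cmul (cser w u (S K)) (qf w u)))
     (fun u => fst (Cmul (Copp w) (Cmul (Cmul (RtoC (u ^ K / INR (fact K))) (Cpow w K)) (qf w u)))) t B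
     (fun u => proj1 (D_der w K u)) (fun u hu => Rle_trans _ _ _ (Cabs_fst _) (bd u hu))) as m1.
  pose proof (mvt_bound (fun u => snd (Cmul (cser w u (S K)) (qf w u)))
     (fun u => snd (Cmul (Copp w) (Cmul (Cmul (RtoC (u ^ K / INR (fact K))) (Cpow w K)) (qf w u)))) t B
     (fun u => proj2 (D_der w K u)) (fun u hu => Rle_trans _ _ _ (Cabs_snd _) (bd u hu))) as m2.
  cbv beta in m1, m2. rewrite cser_0, qf_0 in m1, m2.
  set (D := Cmul (cser w t (S K)) (qf w t)) in *.
  assert (eqc : Cadd (cser w t (S K)) (Copp E) = Cmul (Cadd D (Copp C1)) E).
  { unfold D. pose proof (qf_E w t) as HE. fold E in HE. clearbody E. clear D m1 m2.
    transitivity (Cadd (Cmul (cser w t (S K)) (Cmul (qf w t) E)) (Copp E)).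
    rewrite HE. generalize (cser w t (S K)); intros; cring.
    generalize (cser w t (S K)) (qf w t). intros; cring. }
  rewrite eqc, Cabs_mul. eapply Rle_lt_trans. apply Rmult_le_compat_r. apply Cabs_ge0. apply Cabs_le.
  replace (Cmul C1 C1) with C1 in * by cring.
  unfold C1 in m1, m2 |- *. cbn [fst snd Cadd Copp] in *. unfold Cadd, Copp; cbn [fst snd].
  assert (B * Rabs t = a * Q * Rabs t * x).
  { unfold B, x. rewrite Rpow_mult_distr. unfold Rdiv. ring. }
  assert (Rabs (fst D + - 1) + Rabs (snd D + - 0) <= 2 * (a * Q * Rabs t * x)).
  { unfold Rminus in m1, m2. replace (fst D + -1) with (fst D + - (1)) by ring. lra. }
  pose proof (Cabs_ge0 E).
  apply Rle_lt_trans with (C * x). apply Rle_trans with (2 * (a*Q*Rabs t*x) * Cabs E). apply Rmult_le_compat_r; auto. unfold C; right; ring.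
  apply Rle_lt_trans with ((C+1) * x). nra.
  apply (Rmult_lt_compat_l (C+1)) in hN0; [|lra]. field_simplify in hN0; lra.
Qed.
Section ExpA2.
Variable H : HilbertSpace.
Variable A : H -> H.
Variable M : R.
Hypothesis HM : 0 <= M.
Hypothesis Aadd : forall x y, A (Hadd x y) = Hadd (A x) (A y).
Hypothesis Ascal : forall a x, A (Hscal a x) = Hscal a (A x).
Hypothesis Abnd : forall x, Hnorm H (A x) <= M * Hnorm H x.

Lemma conv t x : Hconv H (epart H A t x) (expA H A t x).
Proof. eapply epart_conv; eauto. Qed.

Lemma expA_add t x y : expA H A t (Hadd x y) = Hadd (expA H A t x) (expA H A t y).
Proof. apply (Hconv_unique H (epart H A t (Hadd x y))). apply conv.
  eapply (fun h => eq_ind _ (fun u => Hconv H u _) h). apply Hconv_add; apply conv.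
  apply functional_extensionality. intro K. unfold epart. rewrite <- Hsum_add. apply Hsum_ext. intros.
  unfold eterm. rewrite (iter_add H A Aadd). rewrite Hscal_addr. auto. Qed.
Lemma expA_scal t a x : expA H A t (Hscal a x) = Hscal a (expA H A t x).
Proof. apply (Hconv_unique H (epart H A t (Hscal a x))). apply conv.
  eapply (fun h => eq_ind _ (fun u => Hconv H u _) h). apply Hconv_scal; apply conv.
  apply functional_extensionality. intro K. unfold epart. rewrite Hsum_scal. apply Hsum_ext. intros.
  unfold eterm. rewrite (iter_scal H A Ascal). rewrite !Hscal_assoc. f_equal. generalize (RtoC (t ^ n / INR (fact n))). intros; cring. Qed.
Lemma expA_sub t x y : expA H A t (Hsub H x y) = Hsub H (expA H A t x) (expA H A t y).
Proof. unfold Hsub. rewrite expA_add, !Hopp_scal, expA_scal. auto. Qed.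
Lemma expA_zero t : expA H A t Hzero = Hzero.
Proof. rewrite <- (Hscal_C0 H Hzero), expA_scal, !Hscal_C0. auto. Qed.
Lemma expA_Hsum t N f : expA H A t (Hsum H N f) = Hsum H N (fun n => expA H A t (f n)).
Proof. induction N; simpl. apply expA_zero. rewrite expA_add, IHN. auto. Qed.
Lemma expA_bnd t x : Hnorm H (expA H A t x) <= exp (Rabs t * M) * Hnorm H x.
Proof. apply (Hconv_norm_le H (epart H A t x)). intro; eapply epart_bnd; eauto. apply conv. Qed.

Lemma Hsub_scal_vec (a c : CC) (v : H) : Hsub H (Hscal a v) (Hscal c v) = Hscal (Cadd a (Copp c)) v.
Proof. unfold Hsub. rewrite Hopp_scal, Hscal_assoc, Hscal_addl. f_equal. f_equal. cring. Qed.

Lemma expA_eig t v w : A v = Hscal w v -> expA H A t v = Hscal (Cexp (Cmul w (RtoC t))) v.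
Proof.
  intro e.
  assert (it : forall k, Nat.iter k A v = Hscal (Cpow w k) v).
  { induction k; simpl. symmetry; apply Hscal_one. rewrite IHk, Ascal, e, Hscal_assoc. f_equal. cring. }
  apply (Hconv_unique H (epart H A t v)). apply conv.
  assert (ep : forall K, epart H A t v K = Hscal (cser w t K) v).
  { intro K. unfold epart, cser. rewrite <- Hsum_scal_vec. apply Hsum_ext. intros. unfold eterm. rewrite it, Hscal_assoc. auto. }
  intros eps eps0. destruct (cser_conv w t (eps / (Hnorm H v + 1))) as [N hN].
  apply Rdiv_lt_0_compat; [lra| pose proof (Hnorm_ge0 H v); lra].
  exists N. intros n hn. rewrite ep, Hsub_scal_vec, Hnorm_scal. specialize (hN n hn).
  pose proof (Hnorm_ge0 H v). pose proof (Cabs_ge0 (Cadd (cser w t n) (Copp (Cexp (Cmul w (RtoC t)))))).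
  apply (Rmult_lt_compat_l (Hnorm H v + 1)) in hN; [|lra]. field_simplify in hN; [|lra]. nra.
Qed.
End ExpA2.
Lemma conv0inf_unique f L1 L2 : conv0inf f L1 -> conv0inf f L2 -> L1 = L2.
Proof.
  intros [i1 c1] [i2 c2]. apply Rle_antisym; apply Rnot_lt_le; intro lt.
  - destruct (c1 ((L1 - L2)/2) ltac:(lra)) as [M1 h1]. destruct (c2 ((L1 - L2)/2) ltac:(lra)) as [M2 h2].
    set (T := Rmax 0 (Rmax M1 M2)). assert (0 <= T) by apply Rmax_l.
    destruct (i1 T H) as [pr]. specialize (h1 T pr H). specialize (h2 T pr H).
    assert (M1 <= T) by (unfold T; eapply Rle_trans; [apply Rmax_l| apply Rmax_r]).
    assert (M2 <= T) by (unfold T; eapply Rle_trans; [apply Rmax_r| apply Rmax_r]).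
    specialize (h1 H0). specialize (h2 H1). unfold Rabs in *. destruct (Rcase_abs _), (Rcase_abs _); lra.
  - destruct (c1 ((L2 - L1)/2) ltac:(lra)) as [M1 h1]. destruct (c2 ((L2 - L1)/2) ltac:(lra)) as [M2 h2].
    set (T := Rmax 0 (Rmax M1 M2)). assert (0 <= T) by apply Rmax_l.
    destruct (i1 T H) as [pr]. specialize (h1 T pr H). specialize (h2 T pr H).
    assert (M1 <= T) by (unfold T; eapply Rle_trans; [apply Rmax_l| apply Rmax_r]).
    assert (M2 <= T) by (unfold T; eapply Rle_trans; [apply Rmax_r| apply Rmax_r]).
    specialize (h1 H0). specialize (h2 H1). unfold Rabs in *. destruct (Rcase_abs _), (Rcase_abs _); lra.
Qed.
Lemma int0inf_eq f L : conv0inf f L -> int0inf f = L.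
Proof. intro c. apply (conv0inf_unique f). unfold int0inf. apply epsilon_spec. exists L; auto. auto. Qed.

Lemma RI_nonneg f T (pr : Riemann_integrable f 0 T) : 0 <= T -> (forall t, 0 <= f t) -> 0 <= RiemannInt pr.
Proof. intros hT p. apply Rle_trans with (RiemannInt (RiemannInt_P14 0 T 0)).
  rewrite RiemannInt_P15. lra. apply RiemannInt_P19; auto. Qed.

Lemma RI_mono f T1 T2 (pr1 : Riemann_integrable f 0 T1) (pr2 : Riemann_integrable f 0 T2) :
  0 <= T1 <= T2 -> (forall t, 0 <= f t) -> RiemannInt pr1 <= RiemannInt pr2.
Proof. intros h p. pose proof (RiemannInt_P23 pr2 h) as pr3.
  rewrite <- (RiemannInt_P26 pr1 pr3 pr2). assert (0 <= RiemannInt pr3).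
  { apply Rle_trans with (RiemannInt (RiemannInt_P14 T1 T2 0)). rewrite RiemannInt_P15. lra.
    apply RiemannInt_P19; [lra | intros; unfold fct_cte; auto]. }
  lra. Qed.

Lemma conv0inf_le f L T (pr : Riemann_integrable f 0 T) : conv0inf f L -> (forall t, 0 <= f t) -> 0 <= T -> RiemannInt pr <= L.
Proof. intros [i c] p hT. apply Rnot_lt_le. intro lt.
  destruct (c (RiemannInt pr - L) ltac:(lra)) as [M h]. set (T' := Rmax T M).
  assert (0 <= T') by (unfold T'; eapply Rle_trans; [exact hT| apply Rmax_l]).
  destruct (i T' H) as [pr']. specialize (h T' pr' H (Rmax_r _ _)).
  pose proof (RI_mono f T T' pr pr' (conj hT (Rmax_l _ _)) p). unfold Rabs in h; destruct (Rcase_abs _); lra. Qed.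

Lemma conv0inf_ub f L B : conv0inf f L -> (forall T (pr : Riemann_integrable f 0 T), 0 <= T -> RiemannInt pr <= B) -> L <= B.
Proof. intros [i c] hb. apply Rnot_lt_le. intro lt.
  destruct (c (L - B) ltac:(lra)) as [M h]. set (T := Rmax 0 M). assert (0 <= T) by apply Rmax_l.
  destruct (i T H) as [pr]. specialize (h T pr H (Rmax_r _ _)). specialize (hb T pr H).
  unfold Rabs in h; destruct (Rcase_abs _); lra. Qed.

Lemma conv0inf_build f B : (forall T, 0 <= T -> inhabited (Riemann_integrable f 0 T)) -> (forall t, 0 <= f t) ->
  (forall T (pr : Riemann_integrable f 0 T), 0 <= T -> RiemannInt pr <= B) -> exists L, conv0inf f L.
Proof.
  intros i p hb. set (E := fun y => exists T (pr : Riemann_integrable f 0 T), 0 <= T /\ y = RiemannInt pr).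
  assert (bE : bound E). { exists B. intros y [T [pr [hT e]]]. subst. auto. }
  assert (nE : exists y, E y). { destruct (i 0 (Rle_refl 0)) as [pr]. exists (RiemannInt pr). exists 0, pr. split; auto; lra. }
  destruct (completeness E bE nE) as [L [ub lub]]. exists L. split; auto.
  intros eps ep. assert (~ is_upper_bound E (L - eps)). { intro u. specialize (lub _ u). lra. }
  apply not_all_ex_not in H. destruct H as [y hy]. apply imply_to_and in hy. destruct hy as [[T0 [pr0 [hT0 ey]]] hy].
  exists T0. intros T pr hT hM. pose proof (RI_mono f T0 T pr0 pr (conj hT0 hM) p).
  assert (RiemannInt pr <= L). { apply ub. exists T, pr. auto. }
  subst y. unfold Rabs; destruct (Rcase_abs _); lra.
Qed.

Lemma conv0inf_exp c a : 0 < a -> conv0inf (fun t => c * exp (- 2 * a * t)) (c / (2 * a)).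
Proof.
  intro ha.
  assert (cont : forall t, continuity_pt (fun t => c * exp (- 2 * a * t)) t).
  { intro t. apply derivable_continuous_pt. exists (c * (-2*a) * exp (-2*a*t)).
    apply (dpl_ext (mult_real_fct c (comp exp (fun u => -2*a*u)))). eapply dpl_eq.
    apply derivable_pt_lim_scal. apply derivable_pt_lim_comp. apply dpl_lin. apply derivable_pt_lim_exp. ring.
    intro; unfold mult_real_fct, comp; auto. }
  assert (val : forall T (pr : Riemann_integrable (fun t => c * exp (- 2 * a * t)) 0 T),
      RiemannInt pr = c / (2*a) - c / (2*a) * exp (- 2 * a * T)).
  { intros T pr. rewrite <- RInt_Reals.
    assert (D : forall x, Rmin 0 T <= x <= Rmax 0 T -> is_derive (fun t => - c / (2*a) * exp (-2*a*t)) x (c * exp (-2*a*x))).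
    { intros x _. auto_derive. auto. field. lra. }
    assert (C : forall x, Rmin 0 T <= x <= Rmax 0 T -> continuous (fun t => c * exp (- 2 * a * t)) x).
    { intros x _. apply continuity_pt_filterlim, cont. }
    rewrite (is_RInt_unique _ _ _ _ (is_RInt_derive _ _ 0 T D C)).
    unfold minus, plus, opp; simpl. rewrite Rmult_0_r, exp_0. field. lra. }
  unfold conv0inf. split.
  - intros T hT. constructor. apply continuity_implies_RiemannInt; [exact hT| intros; apply cont].
  - intros eps ep.
    set (k := eps * (2 * a) / (Rabs c + 1)).
    assert (kp : 0 < k). { unfold k. apply Rdiv_lt_0_compat. nra. pose proof (Rabs_pos c); lra. }
    exists (Rmax 0 (ln k / (- 2 * a))). intros T pr hT hM. rewrite val.
    assert (ex : exp (- 2 * a * T) <= k).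
    { rewrite <- (exp_ln k kp). destruct (Rle_lt_or_eq_dec (- 2 * a * T) (ln k)).
      - assert (ln k / (-2*a) <= T) by (eapply Rle_trans; [apply Rmax_r| exact hM]).
        apply (Rmult_le_compat_r (2*a)) in H; [|lra].
        replace (ln k / (-2*a) * (2*a)) with (- ln k) in H by (field; lra). lra.
      - left. apply exp_increasing; auto.
      - right; f_equal; auto. }
    replace (c / (2 * a) - c / (2 * a) * exp (- 2 * a * T) - c / (2 * a)) with (- (c / (2*a) * exp (-2*a*T))) by ring.
    rewrite Rabs_Ropp, Rabs_mult, (Rabs_right (exp _)) by (left; apply exp_pos).
    unfold Rdiv. rewrite Rabs_mult, (Rabs_right (/ (2*a))) by (left; apply Rinv_0_lt_compat; lra).
    apply Rle_lt_trans with (Rabs c * / (2*a) * k). apply Rmult_le_compat_l; auto.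
    apply Rmult_le_pos. apply Rabs_pos. left; apply Rinv_0_lt_compat; lra.
    pose proof (Rabs_pos c).
    replace (Rabs c * /(2*a) * k) with (eps * (Rabs c / (Rabs c + 1))) by (unfold k; field; split; lra).
    apply Rlt_le_trans with (eps * 1). apply Rmult_lt_compat_l; auto. apply (Rmult_lt_reg_r (Rabs c + 1)); [lra|].
    unfold Rdiv. rewrite Rmult_assoc, Rinv_l by lra. lra. lra.
Qed.
Lemma Csum_ext N f g : (forall n, (n < N)%nat -> f n = g n) -> Csum N f = Csum N g.
Proof. induction N; intro e; simpl; auto. rewrite IHN by (intros; apply e; lia). rewrite e by lia. auto. Qed.
Lemma Csum_RtoC N s : Csum N (fun n => RtoC (s n)) = RtoC (Rsum N s).
Proof. induction N; simpl. reflexivity. rewrite IHN. unfold Cadd, RtoC; simpl. f_equal; ring. Qed.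
Lemma Cabs_sq_add2 u v : Cabs u ^ 2 <= 2 * Cabs v ^ 2 + 2 * Cabs (Cadd u (Copp v)) ^ 2.
Proof. rewrite !Cabs_sq. destruct u as [u1 u2], v as [v1 v2]. unfold Cadd, Copp; cbn [fst snd].
  assert (0 <= (u1 - 2*v1)^2) by apply pow2_ge_0. assert (0 <= (u2 - 2*v2)^2) by apply pow2_ge_0. nra. Qed.

Section Main.
Variable H : HilbertSpace.
Variable A : H -> H.
Variable M : R.
Hypothesis HM : 0 <= M.
Hypothesis Aadd : forall x y, A (Hadd x y) = Hadd (A x) (A y).
Hypothesis Ascal : forall a x, A (Hscal a x) = Hscal a (A x).
Hypothesis Abnd : forall x, Hnorm H (A x) <= M * Hnorm H x.
Variable phi : nat -> H.
Variable lambda : nat -> CC.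
Hypothesis Hphi_nz : forall n, phi n <> Hzero.
Hypothesis Heig : forall n, A (phi n) = Hscal (Copp (lambda n)) (phi n).
Variable b : H.

Definition En n t := Cmul (Cexp (Cmul (Copp (lambda n)) (RtoC t))) (Hinner (phi n) b).
Definition fx (x : H) (t : R) := Cabs (Hinner (expA H A t x) b) ^ 2.

Lemma inner_phi n t : Hinner (expA H A t (phi n)) b = En n t.
Proof. erewrite expA_eig; eauto. rewrite Hinner_scall. reflexivity. Qed.

Lemma inner_fin N (al : nat -> CC) t :
  Hinner (expA H A t (Hsum H N (fun n => Hscal (al n) (phi n)))) b = Csum N (fun n => Cmul (al n) (En n t)).
Proof. erewrite expA_Hsum; eauto. rewrite Hinner_Hsum. apply Csum_ext. intros.
  erewrite expA_scal; eauto. rewrite Hinner_scall, inner_phi. auto. Qed.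

Lemma En_abs2 n t : Cabs (En n t) ^ 2 = Cabs (Hinner (phi n) b) ^ 2 * exp (- 2 * CRe (lambda n) * t).
Proof. unfold En. rewrite Cabs_mul, Cabs_Cexp, Cmul_RtoC. unfold CRe. destruct (lambda n) as [l1 l2]. cbn [fst Copp].
  replace ((exp (- l1 * t) * Cabs (Hinner (phi n) b)) ^ 2) with (Cabs (Hinner (phi n) b) ^ 2 * (exp (- l1 * t) * exp (- l1 * t))) by ring.
  rewrite <- exp_plus. f_equal. f_equal. ring. Qed.

Lemma fx_phi n : fx (phi n) = fun t => Cabs (Hinner (phi n) b) ^ 2 * exp (- 2 * CRe (lambda n) * t).
Proof. apply functional_extensionality. intro t. unfold fx. rewrite inner_phi. apply En_abs2. Qed.

Lemma En2_fun n : (fun t => Cabs (En n t) ^ 2) = fun t => Cabs (Hinner (phi n) b) ^ 2 * exp (- 2 * CRe (lambda n) * t).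
Proof. apply functional_extensionality. intro t. apply En_abs2. Qed.

Lemma L2_En n : CRe (lambda n) > 0 -> L2norm2 (En n) = Cabs (Hinner (phi n) b) ^ 2 / (2 * CRe (lambda n)).
Proof. intro p. unfold L2norm2. rewrite En2_fun. apply int0inf_eq. apply conv0inf_exp. lra. Qed.

Lemma fx_fin N al : fx (Hsum H N (fun n => Hscal (al n) (phi n))) = fun t => Cabs (Csum N (fun n => Cmul (al n) (En n t))) ^ 2.
Proof. apply functional_extensionality. intro t. unfold fx. rewrite inner_fin. auto. Qed.

Lemma phi_norm_pos n : 0 < Hnorm H (phi n).
Proof. pose proof (Hnorm_ge0 H (phi n)). destruct H0; auto. symmetry in H0. apply Hnorm_zero_inv in H0. destruct (Hphi_nz n H0). Qed.

Lemma Cabs_b_phi n : Cabs (Hinner b (phi n)) = Cabs (Hinner (phi n) b).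
Proof. rewrite Hinner_conj. apply Cabs_conj. Qed.

Lemma ratio_sq n : CRe (lambda n) > 0 ->
  (Cabs (Hinner b (phi n)) / (Hnorm H (phi n) * sqrt (2 * CRe (lambda n)))) ^ 2
  = Cabs (Hinner (phi n) b) ^ 2 / (2 * CRe (lambda n)) / Hnorm H (phi n) ^ 2.
Proof. intro p. pose proof (phi_norm_pos n). rewrite Cabs_b_phi.
  assert (0 < sqrt (2 * CRe (lambda n))) by (apply sqrt_lt_R0; lra).
  unfold Rdiv. rewrite !Rpow_mult_distr, pow_inv, Rpow_mult_distr, pow2_sqrt by lra. field. lra. Qed.
Section Fwd.
Variables o1 o2 : R.
Hypothesis o1p : o1 > 0.
Hypothesis o2p : o2 > 0.
Hypothesis obs : forall x : H, exists L, conv0inf (fx x) L /\ o1 * Hnorm H x ^ 2 <= L /\ L <= o2 * Hnorm H x ^ 2.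

Lemma fwd_pos n : CRe (lambda n) > 0.
Proof.
  destruct (obs (phi n)) as [L [cv [lo hi]]]. rewrite fx_phi in cv.
  pose proof (phi_norm_pos n) as np.
  set (C2 := Cabs (Hinner (phi n) b) ^ 2) in *. set (a := CRe (lambda n)) in *.
  assert (C2p : 0 <= C2) by (unfold C2; apply pow2_ge_0).
  assert (Lp : 0 < L). { apply Rlt_le_trans with (o1 * Hnorm H (phi n) ^ 2); auto. apply Rmult_lt_0_compat; auto. apply pow_lt; auto. }
  apply Rnot_le_lt. intro ha.
  assert (ge : forall t, 0 <= t -> C2 <= C2 * exp (- 2 * a * t)).
  { intros t ht. rewrite <- (Rmult_1_r C2) at 1. apply Rmult_le_compat_l; auto.
    rewrite <- exp_0. destruct (Rle_lt_or_eq_dec 0 (-2*a*t)) as [l|e]. nra. left; apply exp_increasing; auto. rewrite e; lra. }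
  pose proof cv as [i c]. destruct (c 1 ltac:(lra)) as [M0 hM].
  assert (lbT : forall T (pr : Riemann_integrable (fun t => C2 * exp (- 2 * a * t)) 0 T), 0 <= T -> C2 * T <= RiemannInt pr).
  { intros T pr T0. apply Rle_trans with (RiemannInt (RiemannInt_P14 0 T C2)). rewrite RiemannInt_P15; lra.
    apply RiemannInt_P19; auto. intros t ht. unfold fct_cte. apply ge. lra. }
  destruct (Req_dec C2 0) as [z|nz].
  - assert (L <= 0). apply (conv0inf_ub _ _ 0 cv). intros T pr T0.
    { apply Rle_trans with (RiemannInt (RiemannInt_P14 0 T 0)). 2: rewrite RiemannInt_P15; lra.
      apply RiemannInt_P19; auto. intros t ht. unfold fct_cte. rewrite z. lra. }
    lra.
  - assert (C2p' : 0 < C2) by lra.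
    set (T := Rmax (Rmax 0 M0) ((L + 1) / C2 + 1)).
    assert (T0 : 0 <= T) by (unfold T; eapply Rle_trans; [apply Rmax_l| apply Rmax_l]).
    assert (TM : M0 <= T) by (unfold T; eapply Rle_trans; [apply Rmax_r| apply Rmax_l]).
    assert (T1 : (L + 1) / C2 + 1 <= T) by (unfold T; apply Rmax_r).
    destruct (i T T0) as [pr]. specialize (hM T pr T0 TM). specialize (lbT T pr T0).
    assert (C2 * T >= L + 1).
    { apply Rle_ge. apply Rle_trans with (C2 * ((L + 1) / C2 + 1)). assert (C2*((L+1)/C2+1) = L+1+C2) by (field; lra). lra.
      apply Rmult_le_compat_l; lra. }
    unfold Rabs in hM. destruct (Rcase_abs _); lra.
Qed.

Lemma fwd_ell n : o1 * Hnorm H (phi n) ^ 2 <= Cabs (Hinner (phi n) b) ^ 2 / (2 * CRe (lambda n)) <= o2 * Hnorm H (phi n) ^ 2.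
Proof. destruct (obs (phi n)) as [L [cv [lo hi]]]. rewrite fx_phi in cv.
  pose proof (fwd_pos n). pose proof (conv0inf_exp (Cabs (Hinner (phi n) b) ^ 2) (CRe (lambda n)) ltac:(lra)).
  rewrite (conv0inf_unique _ _ _ H1 cv). auto. Qed.

Lemma fwd_o12 : o1 <= o2.
Proof. destruct (fwd_ell 0). pose proof (phi_norm_pos 0).
  assert (0 < Hnorm H (phi 0) ^ 2) by (apply pow_lt; auto).
  apply (Rmult_le_reg_r (Hnorm H (phi 0) ^ 2)); auto. lra. Qed.

Lemma fwd_ratio n : sqrt o1 <= Cabs (Hinner b (phi n)) / (Hnorm H (phi n) * sqrt (2 * CRe (lambda n))) <= sqrt o2.
Proof.
  pose proof (fwd_pos n). pose proof (ratio_sq n H0). pose proof (fwd_ell n). pose proof (phi_norm_pos n).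
  set (r := Cabs (Hinner b (phi n)) / (Hnorm H (phi n) * sqrt (2 * CRe (lambda n)))) in *.
  assert (r0 : 0 <= r). { unfold r. apply Rdiv_le_0_compat. apply Cabs_ge0. apply Rmult_lt_0_compat; auto. apply sqrt_lt_R0; lra. }
  set (l := Cabs (Hinner (phi n) b) ^ 2 / (2 * CRe (lambda n))) in *.
  assert (dp : 0 < Hnorm H (phi n) ^ 2) by (apply pow_lt; auto).
  assert (o1 <= r ^ 2 <= o2).
  { rewrite H1. split; apply (Rmult_le_reg_r (Hnorm H (phi n) ^ 2)); auto; unfold Rdiv; rewrite Rmult_assoc, Rinv_l; lra. }
  rewrite <- (sqrt_pow2 r r0). split; apply sqrt_le_1_alt; lra.
Qed.

Lemma fwd_bessel k2 : k2 > 0 -> (forall (N : nat) (a : nat -> CC),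
      Hnorm H (Hsum H N (fun n => Hscal (a n) (phi n))) ^ 2
        <= k2 * Rsum N (fun n => Cabs (a n) ^ 2 * Hnorm H (phi n) ^ 2)) ->
  forall N, Rsum N (fun n => Cabs (Hinner (phi n) b) ^ 2 / Hnorm H (phi n) ^ 2) <= k2 * Hnorm H b ^ 2.
Proof.
  intros k2p up N. set (s := fun n => Cabs (Hinner (phi n) b) ^ 2 / Hnorm H (phi n) ^ 2).
  set (al := fun n => (fst (Hinner (phi n) b) / Hnorm H (phi n) ^ 2, - snd (Hinner (phi n) b) / Hnorm H (phi n) ^ 2) : CC).
  set (x := Hsum H N (fun n => Hscal (al n) (phi n))).
  assert (ip : Hinner x b = RtoC (Rsum N s)).
  { unfold x. rewrite Hinner_Hsum, <- Csum_RtoC. apply Csum_ext. intros n _. rewrite Hinner_scall.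
    unfold al, s. rewrite Cabs_sq. pose proof (phi_norm_pos n). destruct (Hinner (phi n) b) as [u v].
    unfold Cmul, RtoC; cbn [fst snd]. f_equal; field; apply pow_nonzero || idtac; lra. }
  assert (nx : Hnorm H x ^ 2 <= k2 * Rsum N s).
  { eapply Rle_trans. apply up. right. f_equal. apply Rsum_ext. intros n _. unfold al, s.
    rewrite !Cabs_sq. cbn [fst snd]. pose proof (phi_norm_pos n). field. lra. }
  assert (s0 : 0 <= Rsum N s). { apply Rsum_ge0. intro n. unfold s. apply Rdiv_le_0_compat. apply pow2_ge_0. apply pow_lt, phi_norm_pos. }
  pose proof (Cauchy_Schwarz H x b). rewrite ip, Cabs_RtoC, Rabs_right in H0 by lra.
  assert (Rsum N s ^ 2 <= Hnorm H x ^ 2 * Hnorm H b ^ 2).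
  { rewrite <- Rpow_mult_distr. apply pow_incr. auto. }
  pose proof (pow2_ge_0 (Hnorm H b)).
  destruct (Req_dec (Rsum N s) 0) as [z|nz]. rewrite z. apply Rmult_le_pos; lra.
  assert (Rsum N s ^ 2 <= k2 * Rsum N s * Hnorm H b ^ 2) by nra.
  apply (Rmult_le_reg_l (Rsum N s)). lra. nra.
Qed.

Lemma fwd_s n : 2 * CRe (lambda n) * o1 <= Cabs (Hinner (phi n) b) ^ 2 / Hnorm H (phi n) ^ 2.
Proof. pose proof (fwd_ell n) as [l _]. pose proof (fwd_pos n). pose proof (phi_norm_pos n).
  assert (dp : 0 < Hnorm H (phi n) ^ 2) by (apply pow_lt; auto).
  apply (Rmult_le_compat_l (2 * CRe (lambda n))) in l; [|lra].
  replace (2 * CRe (lambda n) * (Cabs (Hinner (phi n) b) ^ 2 / (2 * CRe (lambda n)))) with (Cabs (Hinner (phi n) b) ^ 2) in l by (field; lra).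
  apply (Rmult_le_reg_r (Hnorm H (phi n) ^ 2)); auto.
  replace (Cabs (Hinner (phi n) b) ^ 2 / Hnorm H (phi n) ^ 2 * Hnorm H (phi n) ^ 2) with (Cabs (Hinner (phi n) b) ^ 2) by (field; lra). lra. Qed.

Lemma fwd_cv k2 : k2 > 0 -> (forall (N : nat) (a : nat -> CC),
      Hnorm H (Hsum H N (fun n => Hscal (a n) (phi n))) ^ 2
        <= k2 * Rsum N (fun n => Cabs (a n) ^ 2 * Hnorm H (phi n) ^ 2)) ->
  Un_cv (fun n => CRe (lambda n)) 0.
Proof.
  intros k2p up. pose proof (fwd_bessel k2 k2p up) as bes.
  set (s := fun n => Cabs (Hinner (phi n) b) ^ 2 / Hnorm H (phi n) ^ 2) in *.
  assert (s0 : forall n, 0 <= s n). { intro n. unfold s. apply Rdiv_le_0_compat. apply pow2_ge_0. apply pow_lt, phi_norm_pos. }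
  assert (gr : Un_growing (fun N => Rsum N s)). { intro n. simpl. specialize (s0 n). lra. }
  assert (ub : has_ub (fun N => Rsum N s)). { exists (k2 * Hnorm H b ^ 2). intros y [N e]. subst. apply bes. }
  destruct (growing_cv _ gr ub) as [l hl].
  pose proof (CV_Cauchy _ (exist _ l hl)) as cc.
  intros eps ep. destruct (cc (2 * o1 * eps)) as [N hN]. apply Rmult_lt_0_compat; lra.
  exists N. intros n hn. specialize (hN (S n) n ltac:(lia) hn). unfold Rdist in *. simpl in hN.
  replace (Rsum n s + s n - Rsum n s) with (s n) in hN by ring.
  rewrite Rabs_right in hN by (apply Rle_ge; auto). pose proof (fwd_s n). pose proof (fwd_pos n).
  fold (s n) in H0. rewrite Rminus_0_r, Rabs_right by lra.
  apply (Rmult_lt_reg_l (2 * o1)). lra. lra.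
Qed.

Lemma fwd_L2 k1 k2 : k1 > 0 -> k2 > 0 -> (forall (N : nat) (a : nat -> CC),
      k1 * Rsum N (fun n => Cabs (a n) ^ 2 * Hnorm H (phi n) ^ 2)
        <= Hnorm H (Hsum H N (fun n => Hscal (a n) (phi n))) ^ 2 /\ Hnorm H (Hsum H N (fun n => Hscal (a n) (phi n))) ^ 2
        <= k2 * Rsum N (fun n => Cabs (a n) ^ 2 * Hnorm H (phi n) ^ 2)) ->
  unconditional_sequence_L2 En.
Proof.
  intros k1p k2p bas. split.
  { intro n. exists (Cabs (Hinner (phi n) b) ^ 2 / (2 * CRe (lambda n))). rewrite En2_fun.
    apply conv0inf_exp. pose proof (fwd_pos n); lra. }
  exists (o1 * k1 / o2), (o2 * k2 / o1). split. apply Rdiv_lt_0_compat; nra. split. apply Rdiv_lt_0_compat; nra.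
  intros N al. destruct (obs (Hsum H N (fun n => Hscal (al n) (phi n)))) as [L [cv [lo hi]]].
  rewrite fx_fin in cv. exists L. split; auto.
  destruct (bas N al) as [b1 b2].
  set (P := Rsum N (fun n => Cabs (al n) ^ 2 * Hnorm H (phi n) ^ 2)) in *.
  set (Q := Rsum N (fun n => Cabs (al n) ^ 2 * L2norm2 (En n))).
  assert (Q1 : o1 * P <= Q).
  { unfold P, Q. rewrite <- Rsum_scal. apply Rsum_le. intro n. rewrite L2_En by apply fwd_pos.
    pose proof (fwd_ell n) as [l _]. pose proof (pow2_ge_0 (Cabs (al n))). nra. }
  assert (Q2 : Q <= o2 * P).
  { unfold P, Q. rewrite <- Rsum_scal. apply Rsum_le. intro n. rewrite L2_En by apply fwd_pos.
    pose proof (fwd_ell n) as [_ l]. pose proof (pow2_ge_0 (Cabs (al n))). nra. }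
  split.
  - apply Rle_trans with (o1 * k1 * P). unfold Rdiv.
    replace (o1 * k1 * / o2 * Q) with (o1 * k1 * (Q / o2)) by (field; lra).
    apply Rmult_le_compat_l. nra. apply (Rmult_le_reg_r o2); auto. unfold Rdiv. rewrite Rmult_assoc, Rinv_l; lra.
    eapply Rle_trans; [|exact lo]. rewrite Rmult_assoc. apply Rmult_le_compat_l; [lra| exact b1].
  - apply Rle_trans with (o2 * k2 * P). eapply Rle_trans; [exact hi|]. rewrite Rmult_assoc. apply Rmult_le_compat_l; [lra| exact b2].
    replace (o2 * k2 / o1 * Q) with (o2 * k2 * (Q / o1)) by (field; lra).
    apply Rmult_le_compat_l. nra. apply (Rmult_le_reg_r o1); auto. unfold Rdiv. rewrite Rmult_assoc, Rinv_l; lra.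
Qed.
End Fwd.
Lemma cont_eps f t : (forall eps, eps > 0 -> exists del, del > 0 /\ forall u, Rabs (u - t) < del -> Rabs (f u - f t) < eps) -> continuity_pt f t.
Proof. intros h eps ep. destruct (h eps ep) as [del [dp hd]]. exists del. split; auto.
  intros u [_ hu]. simpl in *. unfold R_dist in *. apply hd. auto. Qed.
Lemma eps_cont f t : continuity_pt f t -> forall eps, eps > 0 -> exists del, del > 0 /\ forall u, Rabs (u - t) < del -> Rabs (f u - f t) < eps.
Proof. intros c eps ep. destruct (c eps ep) as [del [dp hd]]. exists del. split; auto.
  intros u hu. destruct (Req_dec u t). subst. rewrite Rminus_diag, Rabs_R0. auto.
  apply (hd u). split. split. exact I. auto. simpl. unfold R_dist. auto. Qed.

Lemma gfin_der N al t : exists d, CDer (fun u => Csum N (fun n => Cmul (al n) (En n u))) t d.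
Proof. induction N.
  - exists C0. exact (CDer_const C0 t).
  - destruct IHN as [d hd].
    pose proof (CDer_mul (fun u => Cexp (Cmul (Copp (lambda N)) (RtoC u))) (fun _ => Hinner (phi N) b) t _ C0
        (CDer_exp (Copp (lambda N)) t) (CDer_const _ t)) as h1.
    pose proof (CDer_mul (fun _ => al N) (fun u => En N u) t C0 _ (CDer_const (al N) t) h1) as h2.
    eexists. exact (CDer_add _ _ t _ _ hd h2). Qed.

Lemma CDer_cont f t d : CDer f t d -> continuity_pt (fun u => fst (f u)) t /\ continuity_pt (fun u => snd (f u)) t.
Proof. intros [h1 h2]. split; apply derivable_continuous_pt; eexists; eauto. Qed.
Section Bwd.
Hypothesis pos : forall n, CRe (lambda n) > 0.
Variables d1 d2 e1 e2 k1 k2 : R.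
Hypothesis d1p : 0 < d1.
Hypothesis e1p : e1 > 0.
Hypothesis e2p : e2 > 0.
Hypothesis k1p : k1 > 0.
Hypothesis k2p : k2 > 0.
Hypothesis rat : forall n,
        d1 <= Cabs (Hinner b (phi n)) / (Hnorm H (phi n) * sqrt (2 * CRe (lambda n))) /\
        Cabs (Hinner b (phi n)) / (Hnorm H (phi n) * sqrt (2 * CRe (lambda n))) <= d2.
Hypothesis L2c : forall (N : nat) (a : nat -> CC),
      exists L, conv0inf (fun t => Cabs (Csum N (fun n => Cmul (a n) (En n t))) ^ 2) L /\
        e1 * Rsum N (fun n => Cabs (a n) ^ 2 * L2norm2 (En n)) <= L /\
        L <= e2 * Rsum N (fun n => Cabs (a n) ^ 2 * L2norm2 (En n)).
Hypothesis bas : forall (N : nat) (a : nat -> CC),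
      k1 * Rsum N (fun n => Cabs (a n) ^ 2 * Hnorm H (phi n) ^ 2)
        <= Hnorm H (Hsum H N (fun n => Hscal (a n) (phi n))) ^ 2 /\ Hnorm H (Hsum H N (fun n => Hscal (a n) (phi n))) ^ 2
        <= k2 * Rsum N (fun n => Cabs (a n) ^ 2 * Hnorm H (phi n) ^ 2).
Hypothesis compl : complete_sequence H phi.

Lemma bwd_ell n : d1 ^ 2 * Hnorm H (phi n) ^ 2 <= L2norm2 (En n) <= d2 ^ 2 * Hnorm H (phi n) ^ 2.
Proof.
  pose proof (pos n). rewrite L2_En by auto. pose proof (ratio_sq n H0). pose proof (rat n) as [r1 r2].
  set (r := Cabs (Hinner b (phi n)) / (Hnorm H (phi n) * sqrt (2 * CRe (lambda n)))) in *.
  pose proof (phi_norm_pos n). assert (dp : 0 < Hnorm H (phi n) ^ 2) by (apply pow_lt; auto).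
  set (l := Cabs (Hinner (phi n) b) ^ 2 / (2 * CRe (lambda n))) in *.
  assert (l = r ^ 2 * Hnorm H (phi n) ^ 2) by (rewrite H1; field; lra).
  assert (d1 ^ 2 <= r ^ 2) by (apply pow_incr; lra).
  assert (r ^ 2 <= d2 ^ 2) by (apply pow_incr; lra).
  rewrite H3. split; apply Rmult_le_compat_r; lra.
Qed.

Definition C1 := e1 * d1 ^ 2 / k2.
Definition C2 := e2 * d2 ^ 2 / k1.
Lemma C1p : C1 > 0. Proof. unfold C1. apply Rdiv_lt_0_compat; [apply Rmult_lt_0_compat; [lra| apply pow_lt; lra]| lra]. Qed.
Lemma C2p : C2 > 0.
Proof. unfold C2. assert (0 < d2). { pose proof (rat 0) as [r1 r2]. lra. }
  apply Rdiv_lt_0_compat; [apply Rmult_lt_0_compat; [lra| apply pow_lt; lra]| lra]. Qed.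

Lemma bwd_fin N al : exists L, conv0inf (fx (Hsum H N (fun n => Hscal (al n) (phi n)))) L /\
  C1 * Hnorm H (Hsum H N (fun n => Hscal (al n) (phi n))) ^ 2 <= L /\
  L <= C2 * Hnorm H (Hsum H N (fun n => Hscal (al n) (phi n))) ^ 2.
Proof.
  destruct (L2c N al) as [L [cv [lo hi]]]. exists L. rewrite fx_fin. split; auto.
  destruct (bas N al) as [b1 b2].
  set (P := Rsum N (fun n => Cabs (al n) ^ 2 * Hnorm H (phi n) ^ 2)) in *.
  set (Q := Rsum N (fun n => Cabs (al n) ^ 2 * L2norm2 (En n))) in *.
  set (y2 := Hnorm H (Hsum H N (fun n => Hscal (al n) (phi n))) ^ 2) in *.
  assert (Q1 : d1 ^ 2 * P <= Q).
  { unfold P, Q. rewrite <- Rsum_scal. apply Rsum_le. intro n.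
    pose proof (bwd_ell n) as [l _]. pose proof (pow2_ge_0 (Cabs (al n))). nra. }
  assert (Q2 : Q <= d2 ^ 2 * P).
  { unfold P, Q. rewrite <- Rsum_scal. apply Rsum_le. intro n.
    pose proof (bwd_ell n) as [_ l]. pose proof (pow2_ge_0 (Cabs (al n))). nra. }
  assert (d1s : 0 < d1 ^ 2) by (apply pow_lt; lra). pose proof (pow2_ge_0 d2).
  unfold C1, C2. split.
  - apply Rle_trans with (e1 * Q); auto. apply Rle_trans with (e1 * (d1 ^ 2 * P)).
    2: apply Rmult_le_compat_l; lra.
    replace (e1 * d1 ^ 2 / k2 * y2) with (e1 * (d1 ^ 2 * (y2 / k2))) by (field; lra).
    apply Rmult_le_compat_l. lra. apply Rmult_le_compat_l. lra.
    apply (Rmult_le_reg_r k2); auto. replace (y2 / k2 * k2) with y2 by (field; lra). lra.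
  - apply Rle_trans with (e2 * Q); auto. apply Rle_trans with (e2 * (d2 ^ 2 * P)).
    apply Rmult_le_compat_l; lra.
    replace (e2 * d2 ^ 2 / k1 * y2) with (e2 * (d2 ^ 2 * (y2 / k1))) by (field; lra).
    apply Rmult_le_compat_l. lra. apply Rmult_le_compat_l. lra.
    apply (Rmult_le_reg_r k1); auto. replace (y2 / k1 * k1) with y2 by (field; lra). lra.
Qed.

Lemma diff_g x y u : Cadd (Hinner (expA H A u x) b) (Copp (Hinner (expA H A u y) b)) = Hinner (expA H A u (Hsub H x y)) b.
Proof. erewrite expA_sub; eauto. rewrite Hinner_sub_l. auto. Qed.

Lemma g_close z u : Cabs (Hinner (expA H A u z) b) <= exp (Rabs u * M) * Hnorm H z * Hnorm H b.
Proof. eapply Rle_trans. apply Cauchy_Schwarz. apply Rmult_le_compat_r. apply Hnorm_ge0. eapply expA_bnd; eauto. Qed.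

Lemma g_cont_p (p : CC -> R) (hp : forall z w, Rabs (p z - p w) <= Cabs (Cadd z (Copp w)))
  (hfin : forall N al t, continuity_pt (fun u => p (Csum N (fun n => Cmul (al n) (En n u)))) t) x t :
  continuity_pt (fun u => p (Hinner (expA H A u x) b)) t.
Proof.
  apply cont_eps. intros eps ep.
  set (R0 := Rabs t + 1). set (K := exp (R0 * M) * Hnorm H b + 1).
  assert (Kp : 0 < K). { unfold K. pose proof (exp_pos (R0 * M)). pose proof (Hnorm_ge0 H b). nra. }
  destruct (compl x (eps / (3 * K))) as [N [al hy]]. apply Rdiv_lt_0_compat; lra.
  set (y := Hsum H N (fun n => Hscal (al n) (phi n))) in *.
  destruct (eps_cont _ _ (hfin N al t) (eps / 3) ltac:(lra)) as [del [dp hd]].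
  exists (Rmin del 1). split. apply Rmin_glb_lt; lra.
  assert (close : forall u, Rabs u <= R0 -> Rabs (p (Hinner (expA H A u x) b) - p (Hinner (expA H A u y) b)) < eps / 3).
  { intros u hu. eapply Rle_lt_trans. apply hp. rewrite diff_g. eapply Rle_lt_trans. apply g_close.
    assert (exp (Rabs u * M) <= exp (R0 * M)).
    { destruct (Rle_lt_or_eq_dec (Rabs u * M) (R0 * M)). apply Rmult_le_compat_r; auto.
      left; apply exp_increasing; auto. rewrite e; lra. }
    pose proof (exp_pos (Rabs u * M)). pose proof (Hnorm_ge0 H b). pose proof (Hnorm_ge0 H (Hsub H x y)).
    apply Rle_lt_trans with (exp (R0 * M) * Hnorm H b * Hnorm H (Hsub H x y)).
    { replace (exp (Rabs u * M) * Hnorm H (Hsub H x y) * Hnorm H b) with (exp (Rabs u * M) * Hnorm H b * Hnorm H (Hsub H x y)) by ring.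
      apply Rmult_le_compat_r; auto. apply Rmult_le_compat_r; auto. }
    apply Rle_lt_trans with (K * Hnorm H (Hsub H x y)). apply Rmult_le_compat_r; auto. unfold K; lra.
    apply (Rmult_lt_compat_l K) in hy; auto. replace (K * (eps / (3 * K))) with (eps / 3) in hy by (field; lra). auto. }
  intros u hu. assert (hu1 : Rabs (u - t) < del) by (eapply Rlt_le_trans; [exact hu| apply Rmin_l]).
  assert (hu2 : Rabs (u - t) < 1) by (eapply Rlt_le_trans; [exact hu| apply Rmin_r]).
  assert (Rabs u <= R0). { unfold R0. replace u with ((u - t) + t) by ring. eapply Rle_trans. apply Rabs_triang. lra. }
  assert (Rabs t <= R0) by (unfold R0; lra).
  pose proof (close u H0). pose proof (close t H1). specialize (hd u hu1). cbv beta in hd.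
  rewrite <- !(inner_fin N al) in hd. fold y in hd.
  set (a1 := p (Hinner (expA H A u x) b)) in *. set (a2 := p (Hinner (expA H A u y) b)) in *.
  set (a3 := p (Hinner (expA H A t y) b)) in *. set (a4 := p (Hinner (expA H A t x) b)) in *.
  replace (a1 - a4) with ((a1 - a2) + (a2 - a3) + (- (a4 - a3))) by ring.
  pose proof (Rabs_triang ((a1 - a2) + (a2 - a3)) (- (a4 - a3))). pose proof (Rabs_triang (a1 - a2) (a2 - a3)).
  rewrite Rabs_Ropp in H4. lra.
Qed.

Lemma fx_cont x t : continuity_pt (fx x) t.
Proof.
  assert (c1 : continuity_pt (fun u => fst (Hinner (expA H A u x) b)) t).
  { apply g_cont_p. intros z w. exact (Cabs_fst (Cadd z (Copp w))).
    intros N al t0. destruct (gfin_der N al t0) as [d hd]. exact (proj1 (CDer_cont _ _ _ hd)). }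
  assert (c2 : continuity_pt (fun u => snd (Hinner (expA H A u x) b)) t).
  { apply g_cont_p. intros z w. exact (Cabs_snd (Cadd z (Copp w))).
    intros N al t0. destruct (gfin_der N al t0) as [d hd]. exact (proj2 (CDer_cont _ _ _ hd)). }
  replace (fx x) with (plus_fct (mult_fct (fun u => fst (Hinner (expA H A u x) b)) (fun u => fst (Hinner (expA H A u x) b)))
     (mult_fct (fun u => snd (Hinner (expA H A u x) b)) (fun u => snd (Hinner (expA H A u x) b)))).
  apply continuity_pt_plus; apply continuity_pt_mult; auto.
  apply functional_extensionality. intro u. unfold fx, plus_fct, mult_fct. rewrite Cabs_sq. ring.
Qed.

Lemma fx_int x T : 0 <= T -> Riemann_integrable (fx x) 0 T.
Proof. intro h. apply continuity_implies_RiemannInt; auto. intros; apply fx_cont. Qed.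
Lemma fx_ge0 x t : 0 <= fx x t.
Proof. unfold fx. apply pow2_ge_0. Qed.

Lemma sq_bound c B : 0 <= c -> c <= B -> c ^ 2 <= B ^ 2.
Proof. intros. apply pow_incr. lra. Qed.

Lemma bwd_upper x T (pr : Riemann_integrable (fx x) 0 T) : 0 <= T -> RiemannInt pr <= 2 * C2 * Hnorm H x ^ 2.
Proof.
  intro hT. apply Rnot_lt_le; intro lt. pose proof C2p as C2pos.
  set (gap := RiemannInt pr - 2 * C2 * Hnorm H x ^ 2). assert (gp : gap > 0) by (unfold gap; lra).
  set (Kb := exp (T * M) * Hnorm H b). set (nx := Hnorm H x).
  assert (Kb0 : 0 <= Kb) by (unfold Kb; pose proof (exp_pos (T*M)); pose proof (Hnorm_ge0 H b); nra).
  assert (nx0 : 0 <= nx) by apply Hnorm_ge0.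
  set (D := 2 * C2 * (2 * nx + 1) + 2 * T * Kb ^ 2).
  assert (D0 : 0 <= D). { unfold D. pose proof (pow2_ge_0 Kb). nra. }
  set (del := Rmin 1 (gap / (D + 1))).
  assert (dp : 0 < del). { apply Rmin_glb_lt. lra. apply Rdiv_lt_0_compat; lra. }
  assert (d1' : del <= 1) by apply Rmin_l.
  assert (d2' : del <= gap / (D + 1)) by apply Rmin_r.
  destruct (compl x del dp) as [N [al hy]].
  destruct (bwd_fin N al) as [Ly [cvy [loy hiy]]].
  set (y := Hsum H N (fun n => Hscal (al n) (phi n))) in *.
  destruct (proj1 cvy T hT) as [pry].
  set (c := (Kb * del) ^ 2).
  pose proof (@RiemannInt_P10 (fct_cte c) (fx y) 0 T 1 (RiemannInt_P14 0 T c) pry) as prh.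
  pose proof (@RiemannInt_P10 _ _ 0 T 1 prh prh) as prg.
  assert (pw : forall u, 0 < u < T -> fx x u <= (fct_cte c u + 1 * fx y u) + 1 * (fct_cte c u + 1 * fx y u)).
  { intros u hu. unfold fct_cte, fx. pose proof (Cabs_sq_add2 (Hinner (expA H A u x) b) (Hinner (expA H A u y) b)).
    rewrite diff_g in H0. pose proof (g_close (Hsub H x y) u).
    assert (Cabs (Hinner (expA H A u (Hsub H x y)) b) <= Kb * del).
    { eapply Rle_trans. exact H1. unfold Kb.
      assert (exp (Rabs u * M) <= exp (T * M)).
      { rewrite Rabs_right by lra. destruct (Rle_lt_or_eq_dec (u * M) (T * M)). apply Rmult_le_compat_r; lra.
        left; apply exp_increasing; auto. rewrite e; lra. }
      pose proof (exp_pos (Rabs u * M)). pose proof (Hnorm_ge0 H b). pose proof (Hnorm_ge0 H (Hsub H x y)).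
      replace (exp (Rabs u * M) * Hnorm H (Hsub H x y) * Hnorm H b) with ((exp (Rabs u * M) * Hnorm H b) * Hnorm H (Hsub H x y)) by ring.
      apply Rmult_le_compat; try nra; apply Rmult_le_compat_r; auto. }
    pose proof (sq_bound _ _ (Cabs_ge0 _) H2). fold c in H3. lra. }
  pose proof (RiemannInt_P19 pr prg hT pw) as I1.
  pose proof (@RiemannInt_P13 _ _ 0 T 1 prh prh prg) as E1.
  pose proof (@RiemannInt_P13 _ _ 0 T 1 (RiemannInt_P14 0 T c) pry prh) as E2.
  pose proof (RiemannInt_P15 (RiemannInt_P14 0 T c)) as E3.
  cbv beta in E1, E2, I1. rewrite E1, E2, E3 in I1.
  pose proof (conv0inf_le _ _ T pry cvy (fx_ge0 y) hT) as I2.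
  assert (ny : Hnorm H y <= nx + del).
  { pose proof (Hnorm_rev_tri H y x). rewrite Hnorm_sub_sym in H0. unfold nx. lra. }
  assert (ny2 : Hnorm H y ^ 2 <= nx ^ 2 + del * (2 * nx + 1)).
  { pose proof (Hnorm_ge0 H y). apply Rle_trans with ((nx + del) ^ 2). apply pow_incr; lra. nra. }
  assert (cd : c <= Kb ^ 2 * del). { unfold c. rewrite Rpow_mult_distr. pose proof (pow2_ge_0 Kb). nra. }
  assert (RiemannInt pr <= 2 * C2 * nx ^ 2 + del * D).
  { unfold D. assert (c * (T - 0) <= Kb ^ 2 * del * T) by (rewrite Rminus_0_r; apply Rmult_le_compat_r; lra).
    assert (Ly <= C2 * (nx ^ 2 + del * (2 * nx + 1))) by (eapply Rle_trans; [exact hiy| apply Rmult_le_compat_l; lra]).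
    nra. }
  assert (del * D < gap).
  { apply Rle_lt_trans with (gap / (D + 1) * D). apply Rmult_le_compat_r; auto.
    apply Rlt_le_trans with (gap / (D + 1) * (D + 1)). apply Rmult_lt_compat_l. apply Rdiv_lt_0_compat; lra. lra.
    right; field; lra. }
  unfold gap, nx in *. lra.
Qed.

Lemma bwd_lower x L : conv0inf (fx x) L -> C1 * Hnorm H x ^ 2 <= 2 * L.
Proof.
  intro cvx. apply Rnot_lt_le; intro lt. pose proof C2p as C2pos. pose proof C1p as C1pos.
  set (nx := Hnorm H x) in *. assert (nx0 : 0 <= nx) by apply Hnorm_ge0.
  set (gap := C1 * nx ^ 2 - 2 * L). assert (gp : gap > 0) by (unfold gap; lra).
  set (D := C1 * (2 * nx + 1) + 4 * C2).
  assert (D0 : 0 <= D) by (unfold D; nra).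
  set (del := Rmin 1 (gap / (D + 1))).
  assert (dp : 0 < del). { apply Rmin_glb_lt. lra. apply Rdiv_lt_0_compat; lra. }
  assert (d1' : del <= 1) by apply Rmin_l.
  assert (d2' : del <= gap / (D + 1)) by apply Rmin_r.
  destruct (compl x del dp) as [N [al hy]].
  destruct (bwd_fin N al) as [Ly [cvy [loy hiy]]].
  set (y := Hsum H N (fun n => Hscal (al n) (phi n))) in *.
  set (z := Hsub H y x).
  assert (nz : Hnorm H z < del) by (unfold z; rewrite Hnorm_sub_sym; auto).
  assert (LyB : Ly <= 2 * L + 4 * C2 * del ^ 2).
  { apply (conv0inf_ub _ _ _ cvy). intros T pry hT.
    pose proof (fx_int x T hT) as prx. pose proof (fx_int z T hT) as prz.
    pose proof (@RiemannInt_P10 (fx x) (fx z) 0 T 1 prx prz) as prh.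
    pose proof (@RiemannInt_P10 _ _ 0 T 1 prh prh) as prg.
    assert (pw : forall u, 0 < u < T -> fx y u <= (fx x u + 1 * fx z u) + 1 * (fx x u + 1 * fx z u)).
    { intros u hu. unfold fx. pose proof (Cabs_sq_add2 (Hinner (expA H A u y) b) (Hinner (expA H A u x) b)).
      rewrite diff_g in H0. fold z in H0. lra. }
    pose proof (RiemannInt_P19 pry prg hT pw) as I1.
    pose proof (@RiemannInt_P13 _ _ 0 T 1 prh prh prg) as E1.
    pose proof (@RiemannInt_P13 _ _ 0 T 1 prx prz prh) as E2.
    cbv beta in E1, E2, I1. rewrite E1, E2 in I1.
    pose proof (conv0inf_le _ _ T prx cvx (fx_ge0 x) hT).
    pose proof (bwd_upper z T prz hT).
    assert (Hnorm H z ^ 2 <= del ^ 2) by (apply pow_incr; split; [apply Hnorm_ge0| lra]).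
    nra. }
  assert (ny2 : nx ^ 2 - del * (2 * nx + 1) <= Hnorm H y ^ 2).
  { pose proof (Hnorm_ge0 H y). pose proof (Hnorm_rev_tri H x y). fold nx in H1.
    assert (nx <= Hnorm H y + del) by lra. set (ny := Hnorm H y) in *.
    destruct (Rle_lt_dec nx ny).
    - assert (nx ^ 2 <= ny ^ 2) by (apply pow_incr; lra). assert (0 <= del * (2 * nx + 1)) by nra. lra.
    - assert (nx ^ 2 - ny ^ 2 = (nx - ny) * (nx + ny)) by ring.
      assert ((nx - ny) * (nx + ny) <= del * (nx + ny)) by (apply Rmult_le_compat_r; lra).
      assert (del * (nx + ny) <= del * (2 * nx + 1)) by (apply Rmult_le_compat_l; lra). lra. }
  assert (C1 * (nx ^ 2 - del * (2 * nx + 1)) <= 2 * L + 4 * C2 * del).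
  { apply Rle_trans with (C1 * Hnorm H y ^ 2). apply Rmult_le_compat_l; lra.
    apply Rle_trans with Ly; auto. apply Rle_trans with (2 * L + 4 * C2 * del ^ 2); auto.
    assert (del ^ 2 <= del) by nra. apply Rplus_le_compat_l. apply Rmult_le_compat_l; lra. }
  assert (del * D < gap).
  { apply Rle_lt_trans with (gap / (D + 1) * D). apply Rmult_le_compat_r; auto.
    apply Rlt_le_trans with (gap / (D + 1) * (D + 1)). apply Rmult_lt_compat_l. apply Rdiv_lt_0_compat; lra. lra.
    right; field; lra. }
  unfold gap, D in *. nra.
Qed.

Lemma bwd_obs : exactly_observable H A b.
Proof.
  pose proof C1p. pose proof C2p.
  exists (C1 / 2), (2 * C2). split. lra. split. lra. intro x.
  destruct (conv0inf_build (fx x) (2 * C2 * Hnorm H x ^ 2)) as [L cv].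
  - intros T hT. constructor. apply fx_int; auto.
  - apply fx_ge0.
  - intros T pr hT. apply bwd_upper; auto.
  - exists L. split. exact cv. split.
    + pose proof (bwd_lower x L cv). lra.
    + apply (conv0inf_ub _ _ _ cv). intros T pr hT. apply bwd_upper; auto.
Qed.
End Bwd.
End Main.

Theorem theorem3p15
  (H : HilbertSpace) (Hsep : separable H) (Hinf : infinite_dimensional H)
  (A : H -> H) (HA : bounded_operator H A)
  (phi : nat -> H) (lambda : nat -> CC)
  (Hphi_nz : forall n, phi n <> Hzero)
  (Hbasis : unconditional_basis H phi)
  (Heig : forall n, A (phi n) = Hscal (Copp (lambda n)) (phi n))
  (b : H) :
  exactly_observable H A b <->
  ((forall n, CRe (lambda n) > 0) /\
   Un_cv (fun n => CRe (lambda n)) 0 /\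
   unconditional_sequence_L2
     (fun n t => Cmul (Cexp (Cmul (Copp (lambda n)) (RtoC t))) (Hinner (phi n) b)) /\
   (exists c1 c2, 0 < c1 /\ c1 <= c2 /\
      forall n,
        c1 <= Cabs (Hinner b (phi n)) / (Hnorm H (phi n) * sqrt (2 * CRe (lambda n))) /\
        Cabs (Hinner b (phi n)) / (Hnorm H (phi n) * sqrt (2 * CRe (lambda n))) <= c2)).
Proof.
  destruct HA as [Aadd [Ascal [M0 HM0]]].
  set (M := Rmax M0 0).
  assert (HM : 0 <= M) by apply Rmax_r.
  assert (Abnd : forall x, Hnorm H (A x) <= M * Hnorm H x).
  { intro x. eapply Rle_trans. apply HM0. apply Rmult_le_compat_r. apply Hnorm_ge0. apply Rmax_l. }
  destruct Hbasis as [[k1 [k2 [k1p [k2p bas]]]] compl].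
  split.
  - intros [o1 [o2 [o1p [o2p obs]]]].
    assert (obs' : forall x : H, exists L, conv0inf (fx H A b x) L /\ o1 * Hnorm H x ^ 2 <= L /\ L <= o2 * Hnorm H x ^ 2) by exact obs.
    pose proof (fwd_pos H A M HM Ascal Abnd phi lambda Hphi_nz Heig b o1 o2 o1p obs') as pos.
    split; [exact pos|]. split.
    { apply (fwd_cv H A M HM Ascal Abnd phi lambda Hphi_nz Heig b o1 o2 o1p obs' k2 k2p).
      intros N a. apply (proj2 (bas N a)). }
    split.
    { exact (fwd_L2 H A M HM Aadd Ascal Abnd phi lambda Hphi_nz Heig b o1 o2 o1p o2p obs' k1 k2 k1p k2p bas). }
    exists (sqrt o1), (sqrt o2). split. apply sqrt_lt_R0; lra. split.
    apply sqrt_le_1_alt. exact (fwd_o12 H A M HM Ascal Abnd phi lambda Hphi_nz Heig b o1 o2 o1p obs').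
    intro n. exact (fwd_ratio H A M HM Ascal Abnd phi lambda Hphi_nz Heig b o1 o2 o1p obs' n).
  - intros [pos [cv [[inL2 [e1 [e2 [e1p [e2p L2c]]]]] [d1 [d2 [d1p [d12 rat]]]]]]].
    exact (bwd_obs H A M HM Aadd Ascal Abnd phi lambda Hphi_nz Heig b pos d1 d2 e1 e2 k1 k2 d1p e1p e2p k1p k2p rat L2c bas compl).
Qed.
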